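(* Let $n\in\mathbb{N}$, $1<p<q$, $0<\omega<\omega_{p,q}$, and let $u$ be the positive solution of $$u''+\frac{n-1}{r}u'+f(u)=0\ (r>0),\qquad u'(0)=0,\qquad \lim_{r\to\infty}u(r)=0,$$ with $f(u)=-\omega u+u^p-u^q$. Define $$P(r)=r^n\big[u'(r)^2+2F(u(r))\big]+(n-2)r^{n-1}u(r)u'(r),\qquad F(u)=\int_0^u f(s)\,ds.$$ Then $P(r)>0$ for all $r>0$.
   Context: $\omega_{p,q}=\frac{2(q-p)}{(p+1)(q-1)}\left[\frac{(p-1)(q+1)}{(p+1)(q-1)}\right]^{\frac{p-1}{q-p}}$; for such $\omega$ the positive solution exists and is unique. *)

(* Defs.v *)
From Stdlib Require Import Reals Lra.
Open Scope R_scope.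

Definition rpow (s a : R) : R := if Rlt_dec 0 s then Rpower s a else 0.

Definition fnl (omega p q u : R) : R := - omega * u + rpow u p - rpow u q.

(* F(u) = int_0^u f(s) ds, written out in closed form (valid for u >= 0) *)
Definition Fnl (omega p q u : R) : R :=
  - omega * u ^ 2 / 2 + rpow u (p + 1) / (p + 1) - rpow u (q + 1) / (q + 1).

Definition omega_pq (p q : R) : R :=
  2 * (q - p) / ((p + 1) * (q - 1)) *
  Rpower (((p - 1) * (q + 1)) / ((p + 1) * (q - 1))) ((p - 1) / (q - p)).

(* Pohozaev-type function P(r), with u1 the derivative of u *)
Definition Pfun (n : nat) (omega p q : R) (u u1 : R -> R) (r : R) : R :=
  r ^ n * (u1 r ^ 2 + 2 * Fnl omega p q (u r))
  + (INR n - 2) * r ^ (n - 1) * u r * u1 r.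

(* Main.v *)
Require Import Defs.
From Stdlib Require Import Reals Lra Lia Classical.
Open Scope R_scope.

Lemma dlim_ext (f g : R -> R) (x l d : R) :
  0 < d -> (forall y, Rabs (y - x) < d -> f y = g y) ->
  derivable_pt_lim f x l -> derivable_pt_lim g x l.
Proof.
  intros Hd Hfg Hf eps Heps.
  destruct (Hf eps Heps) as [del Hdel].
  assert (Hm : 0 < Rmin del d) by (apply Rmin_pos; [apply cond_pos|lra]).
  exists (mkposreal _ Hm). intros h Hh Hh2. simpl in Hh2.
  rewrite <- (Hfg x) by (rewrite Rminus_diag, Rabs_R0; lra).
  rewrite <- (Hfg (x+h)).
  - apply Hdel; auto. apply Rlt_le_trans with (1 := Hh2). apply Rmin_l.
  - replace (x + h - x) with h by ring. apply Rlt_le_trans with (1 := Hh2). apply Rmin_r.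
Qed.

Lemma cont_epsdelta (f : R -> R) (x : R) :
  continuity_pt f x -> forall eps, 0 < eps -> exists d, 0 < d /\
    forall y, Rabs (y - x) < d -> Rabs (f y - f x) < eps.
Proof.
  intros Hc eps Heps. destruct (Hc eps Heps) as [d [Hd H]].
  exists d; split; auto. intros y Hy.
  destruct (Req_dec y x) as [->|Hne].
  - rewrite Rminus_diag, Rabs_R0; lra.
  - apply (H y). split; [split; [exact I|auto]|]. exact Hy.
Qed.

Lemma epsdelta_cont (f : R -> R) (x : R) :
  (forall eps, 0 < eps -> exists d, 0 < d /\
    forall y, Rabs (y - x) < d -> Rabs (f y - f x) < eps) -> continuity_pt f x.
Proof.
  intros H eps Heps. destruct (H eps Heps) as [d [Hd H']].
  exists d; split; auto. intros y [_ Hy]. apply H'. exact Hy.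
Qed.

Lemma dlim_cont (f : R -> R) (x l : R) : derivable_pt_lim f x l -> continuity_pt f x.
Proof. intros H. apply derivable_continuous_pt. exists l. exact H. Qed.

Lemma dlim_pos_right (f : R -> R) (x l : R) : derivable_pt_lim f x l -> 0 < l ->
  exists d, 0 < d /\ forall h, 0 < h < d -> f x < f (x + h) /\ f (x - h) < f x.
Proof.
  intros Hf Hl. destruct (Hf (l/2) ltac:(lra)) as [d Hd].
  exists d; split; [apply cond_pos|]. intros h [H1 H2].
  split.
  - assert (A := Hd h ltac:(lra) ltac:(rewrite Rabs_right; lra)).
    apply Rabs_def2 in A. destruct A as [A1 A2].
    assert (B : 0 < (f (x + h) - f x) / h) by lra.
    assert (C : 0 < f (x+h) - f x).
    { replace (f (x + h) - f x) with ((f (x + h) - f x) / h * h) by (field; lra).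
      apply Rmult_lt_0_compat; lra. }
    lra.
  - assert (A := Hd (-h) ltac:(lra) ltac:(rewrite Rabs_left; lra)).
    apply Rabs_def2 in A. destruct A as [A1 A2].
    assert (B : 0 < (f (x + - h) - f x) / - h) by lra.
    assert (C : 0 < f x - f (x + - h)).
    { replace (f x - f (x + - h)) with ((f (x + - h) - f x) / - h * h) by (field; lra).
      apply Rmult_lt_0_compat; lra. }
    replace (x - h) with (x + - h) by ring. lra.
Qed.

Lemma dlim_opp (f : R -> R) (x l : R) : derivable_pt_lim f x l ->
  derivable_pt_lim (fun y => - f y) x (- l).
Proof. intros H. apply (derivable_pt_lim_opp f x l H). Qed.

Lemma dlim_neg_right (f : R -> R) (x l : R) : derivable_pt_lim f x l -> l < 0 ->
  exists d, 0 < d /\ forall h, 0 < h < d -> f (x + h) < f x /\ f x < f (x - h).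
Proof.
  intros Hf Hl. destruct (dlim_pos_right (fun y => - f y) x (-l) (dlim_opp _ _ _ Hf) ltac:(lra))
    as [d [Hd H]]. exists d; split; auto. intros h Hh. destruct (H h Hh). lra.
Qed.

Lemma mono_le (g g' : R -> R) (a b : R) : a <= b ->
  (forall c, a <= c <= b -> derivable_pt_lim g c (g' c)) ->
  (forall c, a < c < b -> 0 <= g' c) -> g a <= g b.
Proof.
  intros Hab Hd Hp. destruct (Rle_lt_or_eq_dec a b Hab) as [Hlt| ->]; [|lra].
  destruct (MVT_cor2 g g' a b Hlt Hd) as [c [Hc Hc2]].
  assert (0 <= g' c * (b - a)) by (apply Rmult_le_pos; [apply Hp; auto|lra]). lra.
Qed.

Lemma mono_lt (g g' : R -> R) (a b : R) : a < b ->
  (forall c, a <= c <= b -> derivable_pt_lim g c (g' c)) ->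
  (forall c, a < c < b -> 0 < g' c) -> g a < g b.
Proof.
  intros Hlt Hd Hp.
  destruct (MVT_cor2 g g' a b Hlt Hd) as [c [Hc Hc2]].
  assert (0 < g' c * (b - a)) by (apply Rmult_lt_0_compat; [apply Hp; auto|lra]). lra.
Qed.

Lemma mono_ge (g g' : R -> R) (a b : R) : a <= b ->
  (forall c, a <= c <= b -> derivable_pt_lim g c (g' c)) ->
  (forall c, a < c < b -> g' c <= 0) -> g b <= g a.
Proof.
  intros Hab Hd Hp. destruct (Rle_lt_or_eq_dec a b Hab) as [Hlt| ->]; [|lra].
  destruct (MVT_cor2 g g' a b Hlt Hd) as [c [Hc Hc2]].
  assert (g' c * (b - a) <= 0).
  { assert (0 <= - g' c * (b - a)) by (apply Rmult_le_pos; [assert (H:=Hp c Hc2); lra|lra]). lra. }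
  lra.
Qed.

Lemma mono_gt (g g' : R -> R) (a b : R) : a < b ->
  (forall c, a <= c <= b -> derivable_pt_lim g c (g' c)) ->
  (forall c, a < c < b -> g' c < 0) -> g b < g a.
Proof.
  intros Hlt Hd Hp.
  destruct (MVT_cor2 g g' a b Hlt Hd) as [c [Hc Hc2]].
  assert (0 < - g' c * (b - a)) by (apply Rmult_lt_0_compat; [assert (H:=Hp c Hc2); lra|lra]). lra.
Qed.

Lemma Rpower_pos (x y : R) : 0 < Rpower x y.
Proof. unfold Rpower. apply exp_pos. Qed.

Lemma rpow_eq (t a : R) : 0 < t -> rpow t a = Rpower t a.
Proof. intros Ht. unfold rpow. destruct (Rlt_dec 0 t); [reflexivity|lra]. Qed.

Section Gen.
Variables p q : R.
Hypothesis Hp : 1 < p.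
Hypothesis Hpq : p < q.

Definition gen (C0 A0 B0 t : R) : R :=
  C0 + A0 / (p - 1) * Rpower t (p - 1) + B0 / (q - 1) * Rpower t (q - 1).

Definition phi (A0 B0 t : R) : R := A0 + B0 * Rpower t (q - p).

Lemma dgen C0 A0 B0 t : 0 < t ->
  derivable_pt_lim (gen C0 A0 B0) t (Rpower t (p - 2) * phi A0 B0 t).
Proof.
  intros Ht. unfold gen, phi.
  assert (E : Rpower t (p - 2) * (A0 + B0 * Rpower t (q - p)) =
     0 + A0 / (p - 1) * ((p - 1) * Rpower t (p - 1 - 1))
       + B0 / (q - 1) * ((q - 1) * Rpower t (q - 1 - 1))).
  { replace (p - 1 - 1) with (p - 2) by ring.
    replace (q - 1 - 1) with ((p - 2) + (q - p)) by ring.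
    rewrite Rpower_plus. field. split; lra. }
  rewrite E.
  apply derivable_pt_lim_plus; [apply derivable_pt_lim_plus|].
  - apply derivable_pt_lim_const.
  - apply derivable_pt_lim_scal. apply derivable_pt_lim_power; auto.
  - apply derivable_pt_lim_scal. apply derivable_pt_lim_power; auto.
Qed.

Lemma phi_decr A0 B0 x y : B0 < 0 -> 0 < x < y -> phi A0 B0 y < phi A0 B0 x.
Proof.
  intros HB Hxy. unfold phi.
  assert (Rpower x (q - p) < Rpower y (q - p)) by (apply Rlt_Rpower_l; lra).
  nra.
Qed.

Lemma phi_nincr A0 B0 x y : B0 <= 0 -> 0 < x < y -> phi A0 B0 y <= phi A0 B0 x.
Proof.
  intros HB Hxy. unfold phi.
  assert (Rpower x (q - p) < Rpower y (q - p)) by (apply Rlt_Rpower_l; lra).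
  nra.
Qed.

Lemma phi_ndecr A0 B0 x y : 0 <= B0 -> 0 < x < y -> phi A0 B0 x <= phi A0 B0 y.
Proof.
  intros HB Hxy. unfold phi.
  assert (Rpower x (q - p) < Rpower y (q - p)) by (apply Rlt_Rpower_l; lra).
  nra.
Qed.

Lemma gen_mvt C0 A0 B0 x y : 0 < x < y -> exists c, x < c < y /\
  gen C0 A0 B0 y - gen C0 A0 B0 x = Rpower c (p - 2) * phi A0 B0 c * (y - x).
Proof.
  intros Hxy.
  destruct (MVT_cor2 (gen C0 A0 B0) (fun t => Rpower t (p - 2) * phi A0 B0 t) x y)
    as [c [Hc1 Hc2]]; [lra| |].
  - intros c Hc. apply dgen. lra.
  - exists c. split; auto.
Qed.

Lemma sign_from_mvt a b c : 0 < a -> 0 < c -> (a * b * c <= 0 -> b <= 0) /\ (0 <= a * b * c -> 0 <= b)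
  /\ (a * b * c < 0 -> b < 0) /\ (0 < a * b * c -> 0 < b).
Proof.
  intros Ha Hc. repeat split; intros H.
  - destruct (Rle_or_lt b 0); auto. assert (0 < a * b * c) by (repeat apply Rmult_lt_0_compat; auto). lra.
  - destruct (Rle_or_lt 0 b); auto. assert (0 < a * (- b) * c) by (repeat apply Rmult_lt_0_compat; lra). lra.
  - destruct (Rlt_or_le b 0); auto. assert (0 <= a * b * c) by (repeat apply Rmult_le_pos; lra). lra.
  - destruct (Rlt_or_le 0 b); auto. assert (0 <= a * (- b) * c) by (repeat apply Rmult_le_pos; lra). lra.
Qed.

Lemma gen_qc C0 A0 B0 x y z : B0 < 0 -> 0 < x < y -> y < z ->
  Rmin (gen C0 A0 B0 x) (gen C0 A0 B0 z) < gen C0 A0 B0 y.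
Proof.
  intros HB Hxy Hyz.
  destruct (Rlt_or_le (Rmin (gen C0 A0 B0 x) (gen C0 A0 B0 z)) (gen C0 A0 B0 y)) as [H|H]; auto.
  exfalso.
  assert (H1 : gen C0 A0 B0 y <= gen C0 A0 B0 x) by (eapply Rle_trans; [exact H| apply Rmin_l]).
  assert (H2 : gen C0 A0 B0 y <= gen C0 A0 B0 z) by (eapply Rle_trans; [exact H| apply Rmin_r]).
  destruct (gen_mvt C0 A0 B0 x y Hxy) as [c1 [Hc1 E1]].
  destruct (gen_mvt C0 A0 B0 y z ltac:(lra)) as [c2 [Hc2 E2]].
  destruct (sign_from_mvt (Rpower c1 (p-2)) (phi A0 B0 c1) (y - x) (Rpower_pos _ _) ltac:(lra))
    as [S1 _].
  destruct (sign_from_mvt (Rpower c2 (p-2)) (phi A0 B0 c2) (z - y) (Rpower_pos _ _) ltac:(lra))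
    as [_ [S2 _]].
  assert (phi A0 B0 c1 <= 0) by (apply S1; lra).
  assert (0 <= phi A0 B0 c2) by (apply S2; lra).
  assert (phi A0 B0 c2 < phi A0 B0 c1) by (apply phi_decr; auto; lra). lra.
Qed.

Lemma gen_qcw C0 A0 B0 x y z : B0 <= 0 -> 0 < x < y -> y < z ->
  Rmin (gen C0 A0 B0 x) (gen C0 A0 B0 z) <= gen C0 A0 B0 y.
Proof.
  intros HB Hxy Hyz.
  destruct (Rle_or_lt (Rmin (gen C0 A0 B0 x) (gen C0 A0 B0 z)) (gen C0 A0 B0 y)) as [H|H]; auto.
  exfalso.
  assert (H1 : gen C0 A0 B0 y < gen C0 A0 B0 x) by (eapply Rlt_le_trans; [exact H| apply Rmin_l]).
  assert (H2 : gen C0 A0 B0 y < gen C0 A0 B0 z) by (eapply Rlt_le_trans; [exact H| apply Rmin_r]).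
  destruct (gen_mvt C0 A0 B0 x y Hxy) as [c1 [Hc1 E1]].
  destruct (gen_mvt C0 A0 B0 y z ltac:(lra)) as [c2 [Hc2 E2]].
  destruct (sign_from_mvt (Rpower c1 (p-2)) (phi A0 B0 c1) (y - x) (Rpower_pos _ _) ltac:(lra))
    as [_ [_ [S1 _]]].
  destruct (sign_from_mvt (Rpower c2 (p-2)) (phi A0 B0 c2) (z - y) (Rpower_pos _ _) ltac:(lra))
    as [_ [_ [_ S2]]].
  assert (phi A0 B0 c1 < 0) by (apply S1; lra).
  assert (0 < phi A0 B0 c2) by (apply S2; lra).
  assert (phi A0 B0 c2 <= phi A0 B0 c1) by (apply phi_nincr; auto; lra). lra.
Qed.

Lemma gen_qv C0 A0 B0 x y z : 0 <= B0 -> 0 < x < y -> y < z ->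
  gen C0 A0 B0 y <= Rmax (gen C0 A0 B0 x) (gen C0 A0 B0 z).
Proof.
  intros HB Hxy Hyz.
  destruct (Rle_or_lt (gen C0 A0 B0 y) (Rmax (gen C0 A0 B0 x) (gen C0 A0 B0 z))) as [H|H]; auto.
  exfalso.
  assert (H1 : gen C0 A0 B0 x < gen C0 A0 B0 y) by (eapply Rle_lt_trans; [apply Rmax_l|exact H]).
  assert (H2 : gen C0 A0 B0 z < gen C0 A0 B0 y) by (eapply Rle_lt_trans; [apply Rmax_r|exact H]).
  destruct (gen_mvt C0 A0 B0 x y Hxy) as [c1 [Hc1 E1]].
  destruct (gen_mvt C0 A0 B0 y z ltac:(lra)) as [c2 [Hc2 E2]].
  destruct (sign_from_mvt (Rpower c1 (p-2)) (phi A0 B0 c1) (y - x) (Rpower_pos _ _) ltac:(lra))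
    as [_ [_ [_ S1]]].
  destruct (sign_from_mvt (Rpower c2 (p-2)) (phi A0 B0 c2) (z - y) (Rpower_pos _ _) ltac:(lra))
    as [_ [_ [S2 _]]].
  assert (0 < phi A0 B0 c1) by (apply S1; lra).
  assert (phi A0 B0 c2 < 0) by (apply S2; lra).
  assert (phi A0 B0 c1 <= phi A0 B0 c2) by (apply phi_ndecr; auto; lra). lra.
Qed.

End Gen.

Section Nonlin.
Variables (n : nat) (p q om : R).
Hypothesis Hn : (1 <= n)%nat.
Hypothesis Hp : 1 < p.
Hypothesis Hpq : p < q.
Hypothesis Hom0 : 0 < om.
Hypothesis Hom : om < omega_pq p q.

Definition NN := INR n.
Definition Fp (t : R) := - om * t ^ 2 / 2 + Rpower t (p + 1) / (p + 1) - Rpower t (q + 1) / (q + 1).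
Definition fp (t : R) := - om * t + Rpower t p - Rpower t q.
Definition kap (t : R) := gen p q (- om) (p - 1) (- (q - 1)) t.
Definition ca := 2 * NN / (p + 1) - (NN - 2).
Definition cb := (NN - 2) - 2 * NN / (q + 1).
Definition hh (t : R) := gen p q (- 2 * om) (ca * (p - 1)) (cb * (q - 1)) t.
Definition Gp (t : R) := 2 * NN * Fp t - (NN - 2) * t * fp t.

Lemma NN_ge1 : 1 <= NN.
Proof. unfold NN. replace 1 with (INR 1) by reflexivity. apply le_INR. exact Hn. Qed.

Lemma Rpower_S1 t a : 0 < t -> Rpower t (1 + a) = t * Rpower t a.
Proof. intros Ht. rewrite Rpower_plus, Rpower_1; auto. Qed.

Lemma Rpower_S2 t a : 0 < t -> Rpower t (2 + a) = t ^ 2 * Rpower t a.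
Proof.
  intros Ht. rewrite Rpower_plus. replace 2 with (INR 2) at 1 by (simpl; ring).
  rewrite Rpower_pow; auto.
Qed.

Lemma kap_eq t : kap t = - om + Rpower t (p - 1) - Rpower t (q - 1).
Proof. unfold kap, gen. field. split; lra. Qed.

Lemma hh_eq t : hh t = - 2 * om + ca * Rpower t (p - 1) + cb * Rpower t (q - 1).
Proof. unfold hh, gen. field. split; lra. Qed.

Lemma fp_kap t : 0 < t -> fp t = t * kap t.
Proof.
  intros Ht. rewrite kap_eq. unfold fp.
  replace p with (1 + (p - 1)) at 1 by ring. replace q with (1 + (q - 1)) at 1 by ring.
  rewrite !Rpower_S1; auto. ring.
Qed.

Definition Ap (t : R) := - om / 2 + Rpower t (p - 1) / (p + 1) - Rpower t (q - 1) / (q + 1).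

Lemma Fp_Ap t : 0 < t -> Fp t = t ^ 2 * Ap t.
Proof.
  intros Ht. unfold Fp, Ap.
  replace (p + 1) with (2 + (p - 1)) at 1 by ring. replace (q + 1) with (2 + (q - 1)) at 1 by ring.
  rewrite !Rpower_S2; auto. field. split; lra.
Qed.

Lemma Gp_hh t : 0 < t -> Gp t = t ^ 2 * hh t.
Proof.
  intros Ht. unfold Gp. rewrite Fp_Ap, fp_kap, hh_eq, kap_eq; auto. unfold Ap, ca, cb.
  field. split; lra.
Qed.

Lemma dFp t : 0 < t -> derivable_pt_lim Fp t (fp t).
Proof.
  intros Ht. unfold Fp, fp.
  assert (E : - om * t + Rpower t p - Rpower t q =
    (- om / 2 * (INR 2 * t ^ Init.Nat.pred 2)) + / (p + 1) * ((p + 1) * Rpower t (p + 1 - 1))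
      - / (q + 1) * ((q + 1) * Rpower t (q + 1 - 1))).
  { replace (p + 1 - 1) with p by ring. replace (q + 1 - 1) with q by ring. simpl. field. split; lra. }
  rewrite E.
  apply derivable_pt_lim_minus; [apply derivable_pt_lim_plus|].
  - apply (derivable_pt_lim_ext (fun x => - om / 2 * x ^ 2)).
    + intros x. field.
    + apply derivable_pt_lim_scal. apply derivable_pt_lim_pow.
  - apply (derivable_pt_lim_ext (fun x => / (p + 1) * Rpower x (p + 1))).
    + intros x. field. lra.
    + apply derivable_pt_lim_scal. apply derivable_pt_lim_power; auto.
  - apply (derivable_pt_lim_ext (fun x => / (q + 1) * Rpower x (q + 1))).
    + intros x. field. lra.
    + apply derivable_pt_lim_scal. apply derivable_pt_lim_power; auto.
Qed.

Lemma Rpower_one a : Rpower 1 a = 1.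
Proof. unfold Rpower. rewrite ln_1, Rmult_0_r, exp_0. reflexivity. Qed.

Lemma pow_le1 t a : 0 < t <= 1 -> 0 <= a -> Rpower t a <= 1.
Proof. intros Ht Ha. rewrite <- (Rpower_one a). apply Rle_Rpower_l; lra. Qed.

Lemma small_pow (eta : R) : 0 < eta -> exists tau, 0 < tau <= 1 /\
  forall t, 0 < t <= tau -> Rpower t (p - 1) <= eta /\ Rpower t (q - 1) <= eta.
Proof.
  intros He. set (s := Rpower eta (/ (p - 1))).
  assert (Hs : 0 < s) by apply Rpower_pos.
  exists (Rmin 1 s). split; [split; [apply Rmin_pos; lra|apply Rmin_l]|].
  intros t [Ht1 Ht2].
  assert (A : Rpower t (p - 1) <= eta).
  { apply Rle_trans with (Rpower s (p - 1)).
    - apply Rle_Rpower_l; [lra|]. split; auto. eapply Rle_trans; [exact Ht2| apply Rmin_r].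
    - unfold s. rewrite Rpower_mult. replace (/ (p - 1) * (p - 1)) with 1 by (field; lra).
      rewrite Rpower_1; lra. }
  split; auto.
  replace (q - 1) with ((p - 1) + (q - p)) by ring. rewrite Rpower_plus.
  assert (B : Rpower t (q - p) <= 1).
  { apply pow_le1; [split; auto; eapply Rle_trans; [exact Ht2|apply Rmin_l]|lra]. }
  assert (0 < Rpower t (p - 1)) by apply Rpower_pos.
  assert (0 < Rpower t (q - p)) by apply Rpower_pos. nra.
Qed.

Lemma small_facts : exists tau, 0 < tau <= 1 /\ forall t, 0 < t <= tau ->
  kap t <= - om / 2 /\ hh t < 0 /\ Fp t < 0.
Proof.
  set (eta := Rmin (om / 2) (om / (Rabs ca + Rabs cb + 1))).
  assert (Hca := Rabs_pos ca). assert (Hcb := Rabs_pos cb).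
  assert (He : 0 < eta).
  { apply Rmin_pos; [lra|]. apply Rdiv_lt_0_compat; lra. }
  destruct (small_pow eta He) as [tau [Htau H]].
  exists tau; split; auto. intros t Ht. destruct (H t Ht) as [X Y].
  assert (X0 : 0 < Rpower t (p - 1)) by apply Rpower_pos.
  assert (Y0 : 0 < Rpower t (q - 1)) by apply Rpower_pos.
  assert (E1 : eta <= om / 2) by apply Rmin_l.
  assert (E2 : eta <= om / (Rabs ca + Rabs cb + 1)) by apply Rmin_r.
  split; [|split].
  - rewrite kap_eq. lra.
  - rewrite hh_eq.
    assert (ca * Rpower t (p - 1) <= Rabs ca * eta).
    { apply Rle_trans with (Rabs ca * Rpower t (p - 1)).
      - rewrite <- (Rabs_right (Rpower t (p-1))) at 2 by lra. rewrite <- Rabs_mult. apply Rle_abs.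
      - apply Rmult_le_compat_l; lra. }
    assert (cb * Rpower t (q - 1) <= Rabs cb * eta).
    { apply Rle_trans with (Rabs cb * Rpower t (q - 1)).
      - rewrite <- (Rabs_right (Rpower t (q-1))) at 2 by lra. rewrite <- Rabs_mult. apply Rle_abs.
      - apply Rmult_le_compat_l; lra. }
    assert ((Rabs ca + Rabs cb) * eta < om).
    { apply Rle_lt_trans with ((Rabs ca + Rabs cb) * (om / (Rabs ca + Rabs cb + 1))).
      - apply Rmult_le_compat_l; lra.
      - apply Rmult_lt_reg_r with (Rabs ca + Rabs cb + 1); [lra|].
        field_simplify; lra. }
    nra.
  - rewrite Fp_Ap by lra. unfold Ap.
    assert (Rpower t (p - 1) / (p + 1) <= eta / 2).
    { apply Rmult_le_reg_r with (p + 1); [lra|]. field_simplify; [|lra]. nra. }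
    assert (0 < Rpower t (q - 1) / (q + 1)) by (apply Rdiv_lt_0_compat; lra).
    assert (0 < t ^ 2) by (apply pow_lt; lra).
    assert (- om / 2 + Rpower t (p - 1) / (p + 1) - Rpower t (q - 1) / (q + 1) < 0) by lra.
    nra.
Qed.

Lemma Fp_bound t : 0 < t <= 1 -> Rabs (Fp t) <= (om / 2 + 1) * t ^ 2.
Proof.
  intros Ht. rewrite Fp_Ap by lra. unfold Ap.
  assert (X := pow_le1 t (p - 1) Ht ltac:(lra)).
  assert (Y := pow_le1 t (q - 1) Ht ltac:(lra)).
  assert (X0 : 0 < Rpower t (p - 1)) by apply Rpower_pos.
  assert (Y0 : 0 < Rpower t (q - 1)) by apply Rpower_pos.
  assert (A1 : Rpower t (p - 1) / (p + 1) <= 1).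
  { apply Rmult_le_reg_r with (p + 1); [lra|]. field_simplify; lra. }
  assert (A2 : Rpower t (q - 1) / (q + 1) <= 1).
  { apply Rmult_le_reg_r with (q + 1); [lra|]. field_simplify; lra. }
  assert (A3 : 0 < Rpower t (p - 1) / (p + 1)) by (apply Rdiv_lt_0_compat; lra).
  assert (A4 : 0 < Rpower t (q - 1) / (q + 1)) by (apply Rdiv_lt_0_compat; lra).
  rewrite Rabs_mult. rewrite (Rabs_right (t ^ 2)) by (apply Rle_ge, pow_le; lra).
  rewrite Rmult_comm. apply Rmult_le_compat_r; [apply pow_le; lra|].
  apply Rabs_le. lra.
Qed.

Lemma F_pos_somewhere : exists t0, 0 < t0 /\ 0 < Fp t0.
Proof.
  set (K := ((p - 1) * (q + 1)) / ((p + 1) * (q - 1))).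
  assert (HK : 0 < K) by (unfold K; apply Rdiv_lt_0_compat; nra).
  set (t0 := Rpower K (/ (q - p))).
  assert (Ht0 : 0 < t0) by apply Rpower_pos.
  exists t0; split; auto.
  rewrite Fp_Ap; auto. apply Rmult_lt_0_compat; [apply pow_lt; auto|].
  unfold Ap.
  set (X := Rpower K ((p - 1) / (q - p))).
  assert (E1 : Rpower t0 (p - 1) = X).
  { unfold t0, X. rewrite Rpower_mult. f_equal. field. lra. }
  assert (E2 : Rpower t0 (q - 1) = X * K).
  { replace (q - 1) with ((p - 1) + (q - p)) by ring. rewrite Rpower_plus, E1. f_equal.
    unfold t0. rewrite Rpower_mult. replace (/ (q - p) * (q - p)) with 1 by (field; lra).
    apply Rpower_1; auto. }
  rewrite E1, E2.
  assert (Eo : omega_pq p q = 2 * (q - p) / ((p + 1) * (q - 1)) * X) by reflexivity.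
  assert (E3 : - om / 2 + X / (p + 1) - X * K / (q + 1) = (omega_pq p q - om) / 2).
  { rewrite Eo. unfold K. field. split; lra. }
  rewrite E3. lra.
Qed.

Lemma kap_cont t : 0 < t -> continuity_pt kap t.
Proof. intros Ht. eapply dlim_cont. unfold kap. apply (dgen p q Hp Hpq). exact Ht. Qed.

Lemma kap_large L : 1 < L -> kap L < 0.
Proof.
  intros HL. rewrite kap_eq.
  replace (q - 1) with ((p - 1) + (q - p)) by ring. rewrite Rpower_plus.
  assert (1 < Rpower L (q - p)).
  { rewrite <- (Rpower_one (q - p)). apply Rlt_Rpower_l; lra. }
  assert (0 < Rpower L (p - 1)) by apply Rpower_pos. nra.
Qed.

Lemma beta_exists : exists beta, 0 < beta /\ fp beta = 0 /\ 0 < Fp beta /\ 0 < hh beta /\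
  (forall t, beta < t -> fp t < 0) /\
  (forall t, 0 < t -> 0 <= Fp t -> fp t <= 0 -> beta <= t) /\
  (forall t t', 0 < t -> t <= t' -> t' <= beta -> 0 < Gp t -> 0 < Gp t').
Proof.
  destruct small_facts as [tau [Htau Hsm]].
  destruct F_pos_somewhere as [t0 [Ht0 HF0]].
  set (e := Rmin tau (t0 / 2)).
  assert (He : 0 < e) by (apply Rmin_pos; lra).
  assert (Het : e <= tau) by apply Rmin_r || apply Rmin_l.
  assert (He0 : e < t0) by (assert (e <= t0/2) by apply Rmin_r; lra).
  destruct (Hsm e ltac:(lra)) as [_ [_ HFe]].
  destruct (MVT_cor2 Fp fp e t0 He0) as [c [Ec Hc]].
  { intros x Hx. apply dFp. lra. }
  assert (Hfc : 0 < fp c).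
  { destruct (Rlt_or_le 0 (fp c)); auto. assert (fp c * (t0 - e) <= 0) by (apply Rmult_le_0_r_pos_l_neg_or_so_r; lra) || nra. nra. }
  assert (Hc0 : 0 < c) by lra.
  assert (Hkc : 0 < kap c) by (rewrite fp_kap in Hfc; auto; nra).
  set (L := Rmax c 1 + 1).
  assert (HL1 : 1 < L) by (unfold L; assert (H := Rmax_r c 1); lra).
  assert (HLc : c < L) by (unfold L; assert (H := Rmax_l c 1); lra).
  destruct (Ranalysis5.IVT_interv (fun t => - kap t) c L) as [beta [Hb1 Hb2]].
  { intros a Ha. apply continuity_pt_opp. apply kap_cont. lra. }
  { exact HLc. }
  { lra. }
  { assert (H := kap_large L HL1). lra. }
  assert (Hkb : kap beta = 0) by lra.
  assert (Hcb : c < beta) by (destruct (Rle_lt_or_eq_dec c beta (proj1 Hb1)); auto; subst; lra).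
  assert (Hb0 : 0 < beta) by lra.
  assert (Hfb : fp beta = 0) by (rewrite fp_kap, Hkb; auto; ring).
  assert (Hright : forall t, beta < t -> fp t < 0).
  { intros t Ht. rewrite fp_kap by lra.
    assert (H := gen_qc p q Hp Hpq (- om) (p - 1) (- (q - 1)) c beta t ltac:(lra) ltac:(lra) Ht).
    fold (kap c) (kap t) (kap beta) in H. rewrite Hkb in H.
    assert (kap t < 0).
    { destruct (Rlt_or_le (kap t) 0) as [|H']; auto. assert (0 <= Rmin (kap c) (kap t)) by (apply Rmin_glb; lra). lra. }
    nra. }
  assert (Hleft : forall t, 0 < t -> 0 <= Fp t -> fp t <= 0 -> beta <= t).
  { intros t Ht HFt Hft. destruct (Rle_or_lt beta t) as [|Hlt]; auto. exfalso.
    assert (Hkt : kap t <= 0) by (rewrite fp_kap in Hft; auto; nra).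
    assert (Hs : forall s, 0 < s < t -> fp s < 0).
    { intros s Hs. rewrite fp_kap by lra.
      assert (H := gen_qc p q Hp Hpq (- om) (p - 1) (- (q - 1)) s t beta ltac:(lra) ltac:(lra) Hlt).
      fold (kap s) (kap t) (kap beta) in H. rewrite Hkb in H.
      assert (kap s < 0).
      { destruct (Rlt_or_le (kap s) 0) as [|H']; auto. assert (0 <= Rmin (kap s) 0) by (apply Rmin_glb; lra). lra. }
      nra. }
    set (e' := Rmin tau (t / 2)).
    assert (He' : 0 < e') by (apply Rmin_pos; lra).
    assert (e' <= tau) by apply Rmin_l.
    assert (e' <= t / 2) by apply Rmin_r.
    destruct (Hsm e' ltac:(lra)) as [_ [_ HFe']].
    assert (Fp t < Fp e').
    { apply (mono_gt Fp fp e' t); [lra| |].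
      - intros x Hx. apply dFp. lra.
      - intros x Hx. destruct (Rle_lt_or_eq_dec x t); [lra| |lra]. apply Hs. lra. }
    lra. }
  assert (HFb : 0 < Fp beta).
  { destruct (Rtotal_order t0 beta) as [Hlt|[Heq|Hgt]].
    - assert (Hft0 : 0 < fp t0).
      { destruct (Rlt_or_le 0 (fp t0)); auto. assert (beta <= t0) by (apply Hleft; lra). lra. }
      assert (Hkt0 : 0 < kap t0) by (rewrite fp_kap in Hft0; auto; nra).
      assert (Fp t0 < Fp beta).
      { apply (mono_lt Fp fp t0 beta); [lra| |].
        - intros x Hx. apply dFp. lra.
        - intros x Hx. rewrite fp_kap by lra.
          assert (H := gen_qc p q Hp Hpq (- om) (p - 1) (- (q - 1)) t0 x beta ltac:(lra) ltac:(lra) ltac:(lra)).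
          fold (kap t0) (kap x) (kap beta) in H. rewrite Hkb in H. rewrite Rmin_right in H; [|lra].
          assert (0 < x) by lra. nra. }
      lra.
    - subst; auto.
    - assert (Fp t0 < Fp beta).
      { apply (mono_gt Fp fp beta t0); [lra| |].
        - intros x Hx. apply dFp. lra.
        - intros x Hx. apply Hright. lra. }
      lra. }
  assert (N1 := NN_ge1).
  assert (Hhb : 0 < hh beta).
  { assert (E := Gp_hh beta Hb0). unfold Gp in E. rewrite Hfb in E.
    assert (0 < beta ^ 2) by (apply pow_lt; lra).
    assert (0 < 2 * NN * Fp beta) by (apply Rmult_lt_0_compat; lra).
    nra. }
  exists beta. split; [|split; [|split; [|split; [|split; [|split]]]]]; auto.
  intros t t' Ht Htt Htb HG.
  rewrite Gp_hh in HG |- * by lra.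
  assert (Hht : 0 < hh t) by (assert (0 < t ^ 2) by (apply pow_lt; lra); nra).
  apply Rmult_lt_0_compat; [apply pow_lt; lra|].
  destruct (Rle_lt_or_eq_dec t t' Htt) as [Hlt| <-]; auto.
  destruct (Rle_lt_or_eq_dec t' beta Htb) as [Hlt2| ->]; auto.
  destruct (Rle_or_lt cb 0) as [Hcb0|Hcb0].
  - assert (H := gen_qcw p q Hp Hpq (- 2 * om) (ca * (p - 1)) (cb * (q - 1)) t t' beta
       ltac:(nra) ltac:(lra) Hlt2).
    fold (hh t) (hh t') (hh beta) in H.
    assert (0 < Rmin (hh t) (hh beta)) by (apply Rmin_pos; lra). lra.
  - set (e2 := Rmin tau (t / 2)).
    assert (He2 : 0 < e2) by (apply Rmin_pos; lra).
    assert (e2 <= tau) by apply Rmin_l.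
    assert (e2 <= t / 2) by apply Rmin_r.
    destruct (Hsm e2 ltac:(lra)) as [_ [He2h _]].
    assert (HQ := gen_qv p q Hp Hpq (- 2 * om) (ca * (p - 1)) (cb * (q - 1)) e2 t t'
       ltac:(nra) ltac:(lra) Hlt).
    fold (hh t) (hh t') (hh e2) in HQ.
    destruct (Rlt_or_le 0 (hh t')) as [|Hle]; auto.
    assert (Rmax (hh e2) (hh t') <= 0) by (apply Rmax_lub; lra). lra.
Qed.

End Nonlin.

Lemma dl_plus f g x a b : derivable_pt_lim f x a -> derivable_pt_lim g x b ->
  derivable_pt_lim (fun y => f y + g y) x (a + b).
Proof. intros; apply (derivable_pt_lim_plus f g); auto. Qed.
Lemma dl_minus f g x a b : derivable_pt_lim f x a -> derivable_pt_lim g x b ->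
  derivable_pt_lim (fun y => f y - g y) x (a - b).
Proof. intros; apply (derivable_pt_lim_minus f g); auto. Qed.
Lemma dl_mult f g x a b : derivable_pt_lim f x a -> derivable_pt_lim g x b ->
  derivable_pt_lim (fun y => f y * g y) x (a * g x + f x * b).
Proof. intros; apply (derivable_pt_lim_mult f g); auto. Qed.
Lemma dl_scal c f x a : derivable_pt_lim f x a ->
  derivable_pt_lim (fun y => c * f y) x (c * a).
Proof. intros; apply (derivable_pt_lim_scal f); auto. Qed.
Lemma dl_const c x : derivable_pt_lim (fun _ => c) x 0.
Proof. apply derivable_pt_lim_const. Qed.
Lemma dl_pow k x : derivable_pt_lim (fun y => y ^ k) x (INR k * x ^ Nat.pred k).
Proof. apply derivable_pt_lim_pow. Qed.
Lemma dl_comp f g x a b : derivable_pt_lim f x a -> derivable_pt_lim g (f x) b ->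
  derivable_pt_lim (fun y => g (f y)) x (b * a).
Proof. intros. apply (derivable_pt_lim_comp f g); auto. Qed.
Lemma dl_ext f g x l : (forall y, f y = g y) -> derivable_pt_lim f x l -> derivable_pt_lim g x l.
Proof. intros H Hd. apply (derivable_pt_lim_ext f g x l H Hd). Qed.

Lemma pow_pred_r k r : INR k * r ^ Nat.pred k * r = INR k * r ^ k.
Proof. destruct k; simpl; [ring|]. ring. Qed.

Section ODE.
Variables (m : nat) (p q om : R) (u u1 u2 : R -> R).
Let n := S m.
Hypothesis Hp : 1 < p.
Hypothesis Hpq : p < q.
Hypothesis Hom0 : 0 < om.
Hypothesis Hom : om < omega_pq p q.
Hypothesis Hpos : forall r, 0 <= r -> 0 < u r.
Hypothesis Hd1 : forall r, 0 < r -> derivable_pt_lim u r (u1 r).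
Hypothesis Hd2 : forall r, 0 < r -> derivable_pt_lim u1 r (u2 r).
Hypothesis Hode : forall r, 0 < r ->
     u2 r + (INR n - 1) / r * u1 r + fnl om p q (u r) = 0.
Hypothesis H0 : forall eps, 0 < eps -> exists delta, 0 < delta /\
     forall h, 0 < h < delta -> Rabs ((u h - u 0) / h) < eps.
Hypothesis Hinf : forall eps, 0 < eps -> exists M, forall r, M < r -> Rabs (u r) < eps.

Let N := INR n.
Let Fq := Fp p q om.
Let fq := fp p q om.
Let Gq := Gp n p q om.

Lemma N_eq : N = INR m + 1.
Proof. unfold N, n. rewrite S_INR. ring. Qed.

Lemma ode2 r : 0 < r -> u2 r = - (INR m / r) * u1 r - fq (u r).
Proof.
  intros Hr. assert (H := Hode r Hr). unfold fnl in H.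
  rewrite !rpow_eq in H by (apply Hpos; lra). unfold fq, fp.
  fold N in H. rewrite N_eq in H.
  replace (INR m + 1 - 1) with (INR m) in H by ring. lra.
Qed.

Lemma ucont0 eps : 0 < eps -> exists d, 0 < d /\ forall h, 0 < h < d -> Rabs (u h - u 0) < eps.
Proof.
  intros He. destruct (H0 1 ltac:(lra)) as [d [Hd H]].
  exists (Rmin d eps). split; [apply Rmin_pos; lra|].
  intros h Hh. assert (h < d) by (eapply Rlt_le_trans; [apply Hh|apply Rmin_l]).
  assert (h < eps) by (eapply Rlt_le_trans; [apply Hh|apply Rmin_r]).
  assert (A := H h ltac:(lra)).
  replace (u h - u 0) with ((u h - u 0) / h * h) by (field; lra).
  rewrite Rabs_mult, (Rabs_right h) by lra. nra.
Qed.

Lemma dFu r : 0 < r -> derivable_pt_lim (fun x => Fq (u x)) r (fq (u r) * u1 r).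
Proof.
  intros Hr. apply dl_comp; [apply Hd1; auto|]. apply dFp; auto. apply Hpos; lra.
Qed.

Lemma dl_eqv f x a b : derivable_pt_lim f x a -> a = b -> derivable_pt_lim f x b.
Proof. intros H <-; exact H. Qed.

Definition Ee (r : R) := / 2 * (u1 r * u1 r) + Fq (u r).

Lemma dE r : 0 < r -> derivable_pt_lim Ee r (- (INR m / r) * (u1 r * u1 r)).
Proof.
  intros Hr. unfold Ee. eapply dl_eqv.
  - apply dl_plus; [apply dl_scal; apply dl_mult; apply Hd2; auto| apply dFu; auto].
  - rewrite ode2 by auto. field. lra.
Qed.

Definition ww (r : R) := r ^ m * u1 r.

Lemma dw r : 0 < r -> derivable_pt_lim ww r (- (r ^ m) * fq (u r)).
Proof.
  intros Hr. unfold ww. eapply dl_eqv.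
  - apply dl_mult; [apply dl_pow| apply Hd2; auto].
  - rewrite ode2 by auto.
    replace (INR m * r ^ Nat.pred m) with (INR m * r ^ Nat.pred m * r / r) by (field; lra).
    rewrite pow_pred_r. field. lra.
Qed.

Definition PP (r : R) := r ^ n * (u1 r * u1 r + 2 * Fq (u r)) + (N - 2) * (r ^ m * (u r * u1 r)).

Lemma PP_eq r : 0 < r -> Pfun n om p q u u1 r = PP r.
Proof.
  intros Hr. unfold Pfun, PP. unfold Fnl.
  rewrite !rpow_eq by (apply Hpos; lra).
  replace (n - 1)%nat with m by (unfold n; simpl; lia).
  unfold Fq, Fp. fold N. ring.
Qed.

Lemma dPP r : 0 < r -> derivable_pt_lim PP r (r ^ m * Gq (u r)).
Proof.
  intros Hr. unfold PP. eapply dl_eqv.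
  - apply dl_plus.
    + apply dl_mult; [apply dl_pow|].
      apply dl_plus; [apply dl_mult; apply Hd2; auto|apply dl_scal; apply dFu; auto].
    + apply dl_scal. apply dl_mult; [apply dl_pow|]. apply dl_mult; [apply Hd1; auto|apply Hd2; auto].
  - rewrite ode2 by auto.
    replace (INR m * r ^ Nat.pred m) with (INR m * r ^ Nat.pred m * r / r) by (field; lra).
    rewrite pow_pred_r. unfold n. simpl Nat.pred. fold n.
    unfold Gq, Gp. fold Fq fq. unfold NN. fold N. rewrite N_eq. simpl pow. field. lra.
Qed.

Lemma u1_cont r : 0 < r -> continuity_pt u1 r.
Proof. intros Hr. eapply dlim_cont. apply Hd2; auto. Qed.

Lemma u_cont r : 0 < r -> continuity_pt u r.
Proof. intros Hr. eapply dlim_cont. apply Hd1; auto. Qed.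

Lemma mvt0_lower m0 h : 0 < h -> (forall x, 0 < x < h -> m0 <= u1 x) -> m0 * h <= u h - u 0.
Proof.
  intros Hh Hb. destruct (Rle_or_lt (m0 * h) (u h - u 0)) as [|Hlt]; auto. exfalso.
  set (d := m0 * h - (u h - u 0)).
  assert (Hd : 0 < d) by (unfold d; lra).
  destruct (ucont0 (d / 2) ltac:(lra)) as [d1 [Hd1' Hu]].
  assert (Hm := Rabs_pos m0).
  set (e := Rmin (Rmin d1 h) (d / (2 * (Rabs m0 + 1))) / 2).
  assert (He1 : 0 < Rmin (Rmin d1 h) (d / (2 * (Rabs m0 + 1)))).
  { apply Rmin_pos; [apply Rmin_pos; lra|]. apply Rdiv_lt_0_compat; lra. }
  assert (He : 0 < e) by (unfold e; lra).
  assert (Ha : Rmin (Rmin d1 h) (d / (2 * (Rabs m0 + 1))) <= Rmin d1 h) by apply Rmin_l.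
  assert (Hb' : Rmin d1 h <= d1) by apply Rmin_l.
  assert (Hc : Rmin d1 h <= h) by apply Rmin_r.
  assert (Hd2' : Rmin (Rmin d1 h) (d / (2 * (Rabs m0 + 1))) <= d / (2 * (Rabs m0 + 1))) by apply Rmin_r.
  assert (Heh : e < h) by (unfold e; lra).
  assert (Hed : e < d1) by (unfold e; lra).
  assert (Hee : e * (Rabs m0 + 1) < d / 2).
  { assert (e < d / (2 * (Rabs m0 + 1))) by (unfold e; lra).
    apply Rlt_le_trans with (d / (2 * (Rabs m0 + 1)) * (Rabs m0 + 1)).
    - apply Rmult_lt_compat_r; lra.
    - right. field. lra. }
  destruct (MVT_cor2 u u1 e h Heh) as [c [Ec Hc']].
  { intros x Hx. apply Hd1. lra. }
  assert (A := Hu e ltac:(lra)). apply Rabs_def2 in A.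
  assert (B := Hb c ltac:(lra)).
  assert (m0 * (h - e) <= u1 c * (h - e)) by (apply Rmult_le_compat_r; lra).
  assert (m0 * e <= Rabs m0 * e).
  { assert (H' := Rle_abs m0). nra. }
  assert (Hdd : d = m0 * h - (u h - u 0)) by reflexivity.
  clearbody d. lra.
Qed.

Lemma mvt0_upper M0 h : 0 < h -> (forall x, 0 < x < h -> u1 x <= M0) -> u h - u 0 <= M0 * h.
Proof.
  intros Hh Hb. destruct (Rle_or_lt (u h - u 0) (M0 * h)) as [|Hlt]; auto. exfalso.
  set (d := (u h - u 0) - M0 * h).
  assert (Hd : 0 < d) by (unfold d; lra).
  destruct (ucont0 (d / 2) ltac:(lra)) as [d1 [Hd1' Hu]].
  assert (Hm := Rabs_pos M0).
  set (e := Rmin (Rmin d1 h) (d / (2 * (Rabs M0 + 1))) / 2).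
  assert (He1 : 0 < Rmin (Rmin d1 h) (d / (2 * (Rabs M0 + 1)))).
  { apply Rmin_pos; [apply Rmin_pos; lra|]. apply Rdiv_lt_0_compat; lra. }
  assert (He : 0 < e) by (unfold e; lra).
  assert (Ha : Rmin (Rmin d1 h) (d / (2 * (Rabs M0 + 1))) <= Rmin d1 h) by apply Rmin_l.
  assert (Hb' : Rmin d1 h <= d1) by apply Rmin_l.
  assert (Hc : Rmin d1 h <= h) by apply Rmin_r.
  assert (Hd2' : Rmin (Rmin d1 h) (d / (2 * (Rabs M0 + 1))) <= d / (2 * (Rabs M0 + 1))) by apply Rmin_r.
  assert (Heh : e < h) by (unfold e; lra).
  assert (Hed : e < d1) by (unfold e; lra).
  assert (Hee : e * (Rabs M0 + 1) < d / 2).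
  { assert (e < d / (2 * (Rabs M0 + 1))) by (unfold e; lra).
    apply Rlt_le_trans with (d / (2 * (Rabs M0 + 1)) * (Rabs M0 + 1)).
    - apply Rmult_lt_compat_r; lra.
    - right. field. lra. }
  destruct (MVT_cor2 u u1 e h Heh) as [c [Ec Hc']].
  { intros x Hx. apply Hd1. lra. }
  assert (A := Hu e ltac:(lra)). apply Rabs_def2 in A.
  assert (B := Hb c ltac:(lra)).
  assert (u1 c * (h - e) <= M0 * (h - e)) by (apply Rmult_le_compat_r; lra).
  assert (- (Rabs M0) * e <= M0 * e).
  { assert (H' := Rle_abs (- M0)). rewrite Rabs_Ropp in H'. nra. }
  assert (Hdd : d = (u h - u 0) - M0 * h) by reflexivity.
  clearbody d. lra.
Qed.

Lemma powm_le1 s k : 0 <= s <= 1 -> s ^ k <= 1.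
Proof. intros Hs. rewrite <- (pow1 k). apply pow_incr. lra. Qed.

Lemma fq_bound t T : 0 < t <= T ->
  Rabs (fq t) <= om * T + Rpower T p + Rpower T q.
Proof.
  intros Ht. unfold fq, fp.
  assert (Rpower t p <= Rpower T p) by (apply Rle_Rpower_l; lra).
  assert (Rpower t q <= Rpower T q) by (apply Rle_Rpower_l; lra).
  assert (0 < Rpower t p) by apply Rpower_pos.
  assert (0 < Rpower t q) by apply Rpower_pos.
  apply Rabs_le. nra.
Qed.

Lemma ww_small r eta : 0 < r < 1 -> 0 < eta -> exists s, 0 < s < r /\ Rabs (ww s) < eta.
Proof.
  intros Hr He. apply NNPP. intros Hno.
  assert (Hbig : forall s, 0 < s < r -> eta <= Rabs (u1 s)).
  { intros s Hs. destruct (Rle_or_lt eta (Rabs (ww s))) as [H|H].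
    - unfold ww in H. rewrite Rabs_mult in H.
      assert (Rabs (s ^ m) <= 1).
      { rewrite Rabs_right by (apply Rle_ge, pow_le; lra). apply powm_le1; lra. }
      assert (0 <= Rabs (u1 s)) by apply Rabs_pos.
      assert (0 <= Rabs (s ^ m)) by apply Rabs_pos. nra.
    - exfalso. apply Hno. exists s; auto. }
  destruct (H0 eta He) as [d [Hd Hq]].
  set (h := Rmin d r / 2).
  assert (Hh0 : 0 < h) by (unfold h; assert (0 < Rmin d r) by (apply Rmin_pos; lra); lra).
  assert (Hhd : h < d) by (unfold h; assert (Rmin d r <= d) by apply Rmin_l; lra).
  assert (Hhr : h < r) by (unfold h; assert (Rmin d r <= r) by apply Rmin_r; lra).
  assert (Hqh := Hq h ltac:(lra)).
  destruct (classic (exists s, 0 < s < h /\ 0 < u1 s)) as [[s1 [Hs1 Hu1]]|Hn].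
  - assert (Hall : forall x, 0 < x < h -> eta <= u1 x).
    { intros x Hx. destruct (Rle_or_lt eta (u1 x)) as [|Hlt]; auto. exfalso.
      assert (Hb := Hbig x ltac:(lra)).
      assert (Hneg : u1 x < 0).
      { destruct (Rlt_or_le (u1 x) 0); auto. rewrite Rabs_right in Hb; lra. }
      destruct (Rtotal_order x s1) as [Hxs|[Hxs|Hxs]].
      + destruct (Ranalysis5.IVT_interv u1 x s1) as [z [Hz1 Hz2]]; auto.
        { intros a Ha. apply u1_cont. lra. }
        assert (Hbz := Hbig z ltac:(lra)). rewrite Hz2, Rabs_R0 in Hbz. lra.
      + subst. lra.
      + destruct (Ranalysis5.IVT_interv (fun y => - u1 y) s1 x) as [z [Hz1 Hz2]]; auto; try lra.
        { intros a Ha. apply continuity_pt_opp. apply u1_cont. lra. }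
        assert (Hbz := Hbig z ltac:(lra)). replace (u1 z) with 0 in Hbz by lra.
        rewrite Rabs_R0 in Hbz. lra. }
    assert (A := mvt0_lower eta h Hh0 Hall).
    assert (eta <= (u h - u 0) / h).
    { apply Rmult_le_reg_r with h; auto. field_simplify; lra. }
    apply Rabs_def2 in Hqh. lra.
  - assert (Hall : forall x, 0 < x < h -> u1 x <= - eta).
    { intros x Hx. assert (Hb := Hbig x ltac:(lra)).
      destruct (Rle_or_lt (u1 x) 0) as [Hle|Hlt].
      - rewrite Rabs_left1 in Hb; lra.
      - exfalso. apply Hn. exists x. split; auto. }
    assert (A := mvt0_upper (- eta) h Hh0 Hall).
    assert ((u h - u 0) / h <= - eta).
    { apply Rmult_le_reg_r with h; auto. field_simplify; lra. }
    apply Rabs_def2 in Hqh. lra.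
Qed.

Lemma near0 : exists d0 K, 0 < d0 <= 1 /\ 0 <= K /\ forall r, 0 < r < d0 ->
  Rabs (u1 r) <= K * r /\ u r <= u 0 + 1 /\ Rabs (fq (u r)) <= K.
Proof.
  destruct (ucont0 1 ltac:(lra)) as [da [Hda Hua]].
  set (T := u 0 + 1).
  assert (HT : 0 < T) by (unfold T; assert (H := Hpos 0 ltac:(lra)); lra).
  set (K := om * T + Rpower T p + Rpower T q).
  assert (HK : 0 <= K).
  { unfold K. assert (0 < Rpower T p) by apply Rpower_pos.
    assert (0 < Rpower T q) by apply Rpower_pos. nra. }
  set (d0 := Rmin da 1).
  assert (Hd0 : 0 < d0 <= 1) by (unfold d0; split; [apply Rmin_pos; lra|apply Rmin_r]).
  assert (Hd0a : d0 <= da) by apply Rmin_l.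
  assert (Hubd : forall r, 0 < r < d0 -> 0 < u r <= T).
  { intros r Hr. split; [apply Hpos; lra|]. assert (A := Hua r ltac:(lra)).
    apply Rabs_def2 in A. unfold T. lra. }
  assert (Hfb : forall r, 0 < r < d0 -> Rabs (fq (u r)) <= K).
  { intros r Hr. apply fq_bound. apply Hubd; auto. }
  exists d0, K. split; auto. split; auto. intros r Hr.
  split; [|split; [destruct (Hubd r Hr); unfold T in *; lra|apply Hfb; auto]].
  assert (Hinc : forall s, 0 < s < r -> Rabs (ww r - ww s) <= K * r ^ m * (r - s)).
  { intros s Hs.
    destruct (MVT_cor2 ww (fun x => - (x ^ m) * fq (u x)) s r ltac:(lra)) as [c [Ec Hc]].
    { intros x Hx. apply dw. lra. }
    rewrite Ec. rewrite !Rabs_mult. rewrite Rabs_Ropp.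
    rewrite (Rabs_right (r - s)) by lra.
    rewrite (Rabs_right (c ^ m)) by (apply Rle_ge, pow_le; lra).
    assert (c ^ m <= r ^ m) by (apply pow_incr; lra).
    assert (Rabs (fq (u c)) <= K) by (apply Hfb; lra).
    assert (0 <= c ^ m) by (apply pow_le; lra).
    assert (0 <= Rabs (fq (u c))) by apply Rabs_pos.
    assert (c ^ m * Rabs (fq (u c)) <= r ^ m * K).
    { apply Rmult_le_compat; auto. }
    assert (0 <= r - s) by lra. nra. }
  assert (Hw : Rabs (ww r) <= K * r ^ m * r).
  { apply Rnot_lt_le. intros Hlt.
    set (eta := Rabs (ww r) - K * r ^ m * r).
    destruct (ww_small r eta ltac:(lra) ltac:(unfold eta; lra)) as [s [Hs Hws]].
    assert (A := Hinc s Hs).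
    assert (B : Rabs (ww r) <= Rabs (ww r - ww s) + Rabs (ww s)).
    { replace (ww r) with ((ww r - ww s) + ww s) at 1 by ring. apply Rabs_triang. }
    assert (0 <= K * r ^ m) by (apply Rmult_le_pos; auto; apply pow_le; lra).
    assert (K * r ^ m * (r - s) <= K * r ^ m * r) by (apply Rmult_le_compat_l; lra).
    unfold eta in Hws. lra. }
  unfold ww in Hw. rewrite Rabs_mult, (Rabs_right (r ^ m)) in Hw by (apply Rle_ge, pow_le; lra).
  assert (0 < r ^ m) by (apply pow_lt; lra).
  apply Rmult_le_reg_l with (r ^ m); auto. nra.
Qed.

Lemma ww_bound : exists d0 K, 0 < d0 <= 1 /\ 0 <= K /\ forall s, 0 < s < d0 -> Rabs (ww s) <= K * s.
Proof.
  destruct near0 as [d0 [K [Hd0 [HK H]]]]. exists d0, K. split; auto. split; auto.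
  intros s Hs. destruct (H s Hs) as [A _]. unfold ww. rewrite Rabs_mult.
  rewrite Rabs_right by (apply Rle_ge, pow_le; lra).
  assert (s ^ m <= 1) by (apply powm_le1; lra).
  assert (0 <= s ^ m) by (apply pow_le; lra).
  assert (0 <= Rabs (u1 s)) by apply Rabs_pos.
  assert (s ^ m * Rabs (u1 s) <= 1 * (K * s)) by (apply Rmult_le_compat; lra). lra.
Qed.

Lemma fq_cont t : 0 < t -> continuity_pt fq t.
Proof.
  intros Ht. unfold fq, fp.
  eapply dlim_cont.
  apply dl_minus; [apply dl_plus|].
  - apply (dl_ext (fun y => - om * y)); [intros; ring|]. apply dl_scal. apply derivable_pt_lim_id.
  - apply derivable_pt_lim_power; auto.
  - apply derivable_pt_lim_power; auto.
Qed.

Lemma comp_cont0 (g : R -> R) : continuity_pt g (u 0) ->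
  forall eps, 0 < eps -> exists d, 0 < d /\ forall r, 0 < r < d -> Rabs (g (u r) - g (u 0)) < eps.
Proof.
  intros Hg eps He. destruct (cont_epsdelta g (u 0) Hg eps He) as [d1 [Hd1' Hg']].
  destruct (ucont0 d1 Hd1') as [d2 [Hd2' Hu]]. exists d2. split; [exact Hd2'|].
  intros r Hr. apply Hg'. now apply Hu.
Qed.

Lemma u0pos : 0 < u 0.
Proof. apply Hpos; lra. Qed.

Lemma sign_near0_pos : 0 < fq (u 0) -> exists d, 0 < d /\ forall r, 0 < r < d -> u1 r < 0.
Proof.
  intros Hf.
  destruct (comp_cont0 fq (fq_cont _ u0pos) (fq (u 0)) Hf) as [d1 [Hd1' Hc]].
  destruct ww_bound as [d0 [K [Hd0 [HK Hw]]]].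
  set (d := Rmin d1 d0). assert (Hd : 0 < d) by (apply Rmin_pos; lra).
  assert (d <= d1) by apply Rmin_l. assert (d <= d0) by apply Rmin_r.
  exists d. split; auto. intros r Hr.
  assert (Hfpos : forall x, 0 < x < d -> 0 < fq (u x)).
  { intros x Hx. assert (A := Hc x ltac:(lra)). apply Rabs_def2 in A. lra. }
  assert (Hdec : forall a b, 0 < a < b -> b < d -> ww b < ww a).
  { intros a b Hab Hb. apply (mono_gt ww (fun x => - (x ^ m) * fq (u x))); [lra| |].
    - intros x Hx. apply dw. lra.
    - intros x Hx. assert (0 < x ^ m) by (apply pow_lt; lra).
      assert (0 < fq (u x)) by (apply Hfpos; lra). nra. }
  assert (Hhalf : ww (r / 2) <= 0).
  { apply Rnot_lt_le. intros Hlt.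
    set (s := Rmin (r / 4) (ww (r / 2) / (K + 1))).
    assert (Hs : 0 < s) by (apply Rmin_pos; [lra|apply Rdiv_lt_0_compat; lra]).
    assert (s <= r / 4) by apply Rmin_l. assert (Hs2 : s <= ww (r / 2) / (K + 1)) by apply Rmin_r.
    assert (A := Hdec s (r / 2) ltac:(lra) ltac:(lra)).
    assert (B := Hw s ltac:(lra)). assert (B2 := Rle_abs (ww s)).
    assert (K * s < ww (r / 2)).
    { apply Rlt_le_trans with ((K + 1) * s); [nra|].
      apply Rle_trans with ((K + 1) * (ww (r / 2) / (K + 1))).
      - apply Rmult_le_compat_l; lra.
      - right; field; lra. }
    lra. }
  assert (C := Hdec (r / 2) r ltac:(lra) ltac:(lra)).
  assert (Hwr : ww r < 0) by lra.
  unfold ww in Hwr. assert (0 < r ^ m) by (apply pow_lt; lra).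
  destruct (Rlt_or_le (u1 r) 0); auto. nra.
Qed.

Lemma sign_near0_neg : fq (u 0) < 0 -> exists d, 0 < d /\ forall r, 0 < r < d -> 0 < u1 r.
Proof.
  intros Hf.
  destruct (comp_cont0 fq (fq_cont _ u0pos) (- fq (u 0)) ltac:(lra)) as [d1 [Hd1' Hc]].
  destruct ww_bound as [d0 [K [Hd0 [HK Hw]]]].
  set (d := Rmin d1 d0). assert (Hd : 0 < d) by (apply Rmin_pos; lra).
  assert (d <= d1) by apply Rmin_l. assert (d <= d0) by apply Rmin_r.
  exists d. split; auto. intros r Hr.
  assert (Hfneg : forall x, 0 < x < d -> fq (u x) < 0).
  { intros x Hx. assert (A := Hc x ltac:(lra)). apply Rabs_def2 in A. lra. }
  assert (Hinc : forall a b, 0 < a < b -> b < d -> ww a < ww b).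
  { intros a b Hab Hb. apply (mono_lt ww (fun x => - (x ^ m) * fq (u x))); [lra| |].
    - intros x Hx. apply dw. lra.
    - intros x Hx. assert (0 < x ^ m) by (apply pow_lt; lra).
      assert (fq (u x) < 0) by (apply Hfneg; lra). nra. }
  assert (Hhalf : 0 <= ww (r / 2)).
  { apply Rnot_lt_le. intros Hlt.
    set (s := Rmin (r / 4) (- ww (r / 2) / (K + 1))).
    assert (Hs : 0 < s) by (apply Rmin_pos; [lra|apply Rdiv_lt_0_compat; lra]).
    assert (s <= r / 4) by apply Rmin_l. assert (Hs2 : s <= - ww (r / 2) / (K + 1)) by apply Rmin_r.
    assert (A := Hinc s (r / 2) ltac:(lra) ltac:(lra)).
    assert (B := Hw s ltac:(lra)). assert (B2 := Rle_abs (- ww s)). rewrite Rabs_Ropp in B2.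
    assert (K * s < - ww (r / 2)).
    { apply Rlt_le_trans with ((K + 1) * s); [nra|].
      apply Rle_trans with ((K + 1) * (- ww (r / 2) / (K + 1))).
      - apply Rmult_le_compat_l; lra.
      - right; field; lra. }
    lra. }
  assert (C := Hinc (r / 2) r ltac:(lra) ltac:(lra)).
  assert (Hwr : 0 < ww r) by lra.
  unfold ww in Hwr. assert (0 < r ^ m) by (apply pow_lt; lra).
  destruct (Rlt_or_le 0 (u1 r)); auto. nra.
Qed.

Lemma E_nonincr a b : 0 < a -> a <= b -> Ee b <= Ee a.
Proof.
  intros Ha Hab. apply (mono_ge Ee (fun x => - (INR m / x) * (u1 x * u1 x))); auto.
  - intros c Hc. apply dE. lra.
  - intros c Hc. assert (0 <= INR m / c) by (unfold Rdiv; apply Rmult_le_pos; [apply pos_INR|apply Rlt_le, Rinv_0_lt_compat; lra]).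
    assert (0 <= u1 c * u1 c) by nra. nra.
Qed.

Lemma E_nonneg r : 0 < r -> 0 <= Ee r.
Proof.
  intros Hr. apply Rnot_lt_le. intros Hlt.
  set (eta := - Ee r).
  set (tau := Rmin 1 (eta / (om + 2))).
  assert (Htau : 0 < tau) by (apply Rmin_pos; [lra|apply Rdiv_lt_0_compat; unfold eta; lra]).
  assert (tau <= 1) by apply Rmin_l. assert (Ht2 : tau <= eta / (om + 2)) by apply Rmin_r.
  destruct (Hinf tau Htau) as [M HM].
  set (s := Rmax M r + 1).
  assert (Hs1 : M < s) by (unfold s; assert (HX := Rmax_l M r); lra).
  assert (Hs2 : r < s) by (unfold s; assert (HX := Rmax_r M r); lra).
  assert (A := HM s Hs1). assert (Hus : 0 < u s) by (apply Hpos; lra).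
  rewrite Rabs_right in A by lra.
  assert (B := Fp_bound p q om Hp Hpq Hom0 (u s) ltac:(lra)).
  assert (C := E_nonincr r s Hr ltac:(lra)).
  assert (Es : Ee s = / 2 * (u1 s * u1 s) + Fq (u s)) by reflexivity. fold Fq in B.
  assert (D : (om / 2 + 1) * u s ^ 2 < eta / 2).
  { assert (u s ^ 2 <= u s) by (simpl; nra).
    apply Rle_lt_trans with ((om / 2 + 1) * u s); [apply Rmult_le_compat_l; lra|].
    apply Rlt_le_trans with ((om / 2 + 1) * tau); [apply Rmult_lt_compat_l; lra|].
    apply Rle_trans with ((om / 2 + 1) * (eta / (om + 2))); [apply Rmult_le_compat_l; lra|].
    right. field. lra. }
  assert (B2 := Rle_abs (- Fq (u s))). rewrite Rabs_Ropp in B2. unfold eta in *.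
  assert (0 <= u1 s * u1 s) by nra. lra.
Qed.

Lemma sq_le_of_abs x a : Rabs x <= a -> x * x <= a * a.
Proof. intros H. assert (H1 := Rle_abs x). assert (H2 := Rle_abs (- x)). rewrite Rabs_Ropp in H2. nra. Qed.

Lemma F0_nonneg : 0 <= Fq (u 0).
Proof.
  apply Rnot_lt_le. intros Hlt.
  set (eta := - Fq (u 0) / 2).
  assert (He : 0 < eta) by (unfold eta; lra).
  destruct (comp_cont0 Fq (dlim_cont _ _ _ (dFp p q om Hp Hpq (u 0) u0pos)) eta He) as [d1 [Hd1' Hc]].
  destruct near0 as [d0 [K [Hd0 [HK Hn0]]]].
  assert (HK2 : 0 <= K * K) by nra.
  set (r := Rmin (Rmin d1 d0) (eta / (K * K + 1)) / 2).
  assert (Hm : 0 < Rmin (Rmin d1 d0) (eta / (K * K + 1))).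
  { apply Rmin_pos; [apply Rmin_pos; lra|apply Rdiv_lt_0_compat; lra]. }
  assert (A1 : Rmin (Rmin d1 d0) (eta / (K * K + 1)) <= Rmin d1 d0) by apply Rmin_l.
  assert (A2 : Rmin (Rmin d1 d0) (eta / (K * K + 1)) <= eta / (K * K + 1)) by apply Rmin_r.
  assert (A3 : Rmin d1 d0 <= d1) by apply Rmin_l.
  assert (A4 : Rmin d1 d0 <= d0) by apply Rmin_r.
  assert (Hr : 0 < r) by (unfold r; lra).
  assert (Hr1 : r < d1) by (unfold r; lra).
  assert (Hr0 : r < d0) by (unfold r; lra).
  assert (Hre : r < eta / (K * K + 1)) by (unfold r; lra).
  assert (E := E_nonneg r Hr). unfold Ee in E.
  destruct (Hn0 r ltac:(lra)) as [B _].
  assert (B2 := sq_le_of_abs _ _ B).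
  assert (C := Hc r ltac:(lra)). apply Rabs_def2 in C.
  assert (K * r * (K * r) <= K * K * r) by (assert (r <= 1) by lra; nra).
  assert (K * K * r < eta).
  { apply Rle_lt_trans with (K * K * (eta / (K * K + 1))); [apply Rmult_le_compat_l; lra|].
    apply Rmult_lt_reg_r with (K * K + 1); [lra|]. field_simplify; nra. }
  unfold eta in *. lra.
Qed.

Lemma PP_near0 delta : 0 < delta -> exists e0, 0 < e0 /\ forall e, 0 < e < e0 -> - delta < PP e.
Proof.
  intros Hdel.
  destruct near0 as [d0 [K [Hd0 [HK Hn0]]]].
  set (T := u 0 + 1).
  assert (HT : 0 < T) by (unfold T; assert (H := u0pos); lra).
  set (CF := om * T ^ 2 / 2 + Rpower T (q + 1)).
  assert (HCF : 0 <= CF).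
  { unfold CF. assert (0 < Rpower T (q + 1)) by apply Rpower_pos.
    assert (0 < T ^ 2) by (apply pow_lt; lra). nra. }
  assert (HN := Rabs_pos (N - 2)).
  set (C := 2 * CF + Rabs (N - 2) * T * K + 1).
  assert (HC : 0 < C) by (unfold C; assert (0 <= Rabs (N - 2) * T * K) by (apply Rmult_le_pos; [apply Rmult_le_pos|]; lra); lra).
  exists (Rmin d0 (delta / C)). split; [apply Rmin_pos; [lra|apply Rdiv_lt_0_compat; lra]|].
  intros e He.
  assert (He0 : e < d0) by (eapply Rlt_le_trans; [apply He|apply Rmin_l]).
  assert (HeC : e < delta / C) by (eapply Rlt_le_trans; [apply He|apply Rmin_r]).
  destruct (Hn0 e ltac:(lra)) as [B1 [B2 _]].
  assert (Hue : 0 < u e) by (apply Hpos; lra).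
  fold T in B2.
  assert (A1 : - CF <= Fq (u e)).
  { unfold Fq, Fp, CF.
    assert (Rpower (u e) (q + 1) <= Rpower T (q + 1)) by (apply Rle_Rpower_l; lra).
    assert (u e ^ 2 <= T ^ 2) by (apply pow_incr; lra).
    assert (0 < Rpower (u e) (p + 1)) by apply Rpower_pos.
    assert (0 < Rpower (u e) (q + 1)) by apply Rpower_pos.
    assert (0 < Rpower (u e) (p + 1) / (p + 1)) by (apply Rdiv_lt_0_compat; lra).
    assert (Rpower (u e) (q + 1) / (q + 1) <= Rpower (u e) (q + 1)).
    { apply Rmult_le_reg_r with (q + 1); [lra|]. field_simplify; nra. }
    nra. }
  assert (Hem : e ^ m <= 1) by (apply powm_le1; lra).
  assert (Hem0 : 0 < e ^ m) by (apply pow_lt; lra).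
  assert (Hen : e ^ n = e * e ^ m) by reflexivity.
  assert (A2 : e ^ n * (u1 e * u1 e + 2 * Fq (u e)) >= - 2 * CF * e).
  { assert (0 <= u1 e * u1 e) by nra.
    rewrite Hen.
    assert (S1 : e ^ m * (u1 e * u1 e + 2 * Fq (u e)) >= e ^ m * (- 2 * CF)).
    { apply Rle_ge, Rmult_le_compat_l; lra. }
    assert (S2 : e ^ m * (- 2 * CF) >= - 2 * CF) by nra.
    assert (S3 : e * (e ^ m * (u1 e * u1 e + 2 * Fq (u e))) >= e * (- 2 * CF)).
    { apply Rle_ge, Rmult_le_compat_l; lra. }
    rewrite <- Rmult_assoc in S3. lra. }
  assert (A3 : Rabs ((N - 2) * (e ^ m * (u e * u1 e))) <= Rabs (N - 2) * T * K * e).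
  { rewrite !Rabs_mult. rewrite (Rabs_right (e ^ m)) by lra. rewrite (Rabs_right (u e)) by lra.
    assert (0 <= Rabs (u1 e)) by apply Rabs_pos.
    assert (e ^ m * (u e * Rabs (u1 e)) <= 1 * (T * (K * e))).
    { apply Rmult_le_compat; try lra. { apply Rmult_le_pos; lra. }
      apply Rmult_le_compat; lra. }
    nra. }
  assert (A4 := Rle_abs (- ((N - 2) * (e ^ m * (u e * u1 e))))). rewrite Rabs_Ropp in A4.
  unfold PP.
  assert (C * e < delta).
  { apply Rlt_le_trans with (C * (delta / C)); [apply Rmult_lt_compat_l; lra|]. right; field; lra. }
  unfold C in *. nra.
Qed.

Lemma incr_from0 d h : (forall x, 0 < x < d -> 0 < u1 x) -> 0 < h < d -> u 0 < u h.
Proof.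
  intros Hs Hh.
  assert (A := mvt0_lower 0 (h / 2) ltac:(lra) ltac:(intros x Hx; assert (H := Hs x ltac:(lra)); lra)).
  assert (B : u (h / 2) < u h).
  { apply (mono_lt u u1); [lra| |].
    - intros c Hc. apply Hd1. lra.
    - intros c Hc. apply Hs. lra. }
  lra.
Qed.

Lemma decr_from0 d h : (forall x, 0 < x < d -> u1 x < 0) -> 0 < h < d -> u h < u 0.
Proof.
  intros Hs Hh.
  assert (A := mvt0_upper 0 (h / 2) ltac:(lra) ltac:(intros x Hx; assert (H := Hs x ltac:(lra)); lra)).
  assert (B : u h < u (h / 2)).
  { apply (mono_gt u u1); [lra| |].
    - intros c Hc. apply Hd1. lra.
    - intros c Hc. apply Hs. lra. }
  lra.
Qed.

Definition ut (x : R) := u (Rmax 0 x).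

Lemma ut_cont c : 0 <= c -> continuity_pt ut c.
Proof.
  intros Hc. apply epsdelta_cont. intros eps He.
  destruct (Rle_lt_or_eq_dec 0 c Hc) as [Hlt| <-].
  - destruct (cont_epsdelta u c (u_cont c Hlt) eps He) as [d [Hd H]].
    exists (Rmin d c). split; [apply Rmin_pos; lra|].
    intros y Hy. assert (Rmin d c <= d) by apply Rmin_l. assert (Rmin d c <= c) by apply Rmin_r.
    apply Rabs_def2 in Hy. unfold ut. rewrite !Rmax_right by lra. apply H. apply Rabs_def1; lra.
  - destruct (ucont0 eps He) as [d [Hd H]]. exists d. split; auto.
    intros y Hy. unfold ut. rewrite (Rmax_left 0 0) by lra.
    destruct (Rle_or_lt y 0) as [Hy0|Hy0].
    + rewrite Rmax_left by lra. rewrite Rminus_diag, Rabs_R0. lra.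
    + rewrite Rmax_right by lra. apply H. rewrite Rminus_0_r in Hy. rewrite Rabs_right in Hy by lra. lra.
Qed.

Lemma max_on R0 : 0 <= R0 -> exists M, 0 <= M <= R0 /\ forall c, 0 <= c <= R0 -> u c <= u M.
Proof.
  intros HR. destruct (continuity_ab_maj ut 0 R0 HR) as [M [HM1 HM2]].
  { intros c Hc. apply ut_cont. lra. }
  exists M. split; auto. intros c Hc. assert (A := HM1 c Hc). unfold ut in A.
  rewrite !Rmax_right in A by lra. exact A.
Qed.

Lemma min_on R0 : 0 <= R0 -> exists M, 0 <= M <= R0 /\ forall c, 0 <= c <= R0 -> u M <= u c.
Proof.
  intros HR. destruct (continuity_ab_min ut 0 R0 HR) as [M [HM1 HM2]].
  { intros c Hc. apply ut_cont. lra. }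
  exists M. split; auto. intros c Hc. assert (A := HM1 c Hc). unfold ut in A.
  rewrite !Rmax_right in A by lra. exact A.
Qed.

Lemma crit_max x a b : a < x < b -> (forall c, a <= c <= b -> u c <= u x) -> 0 < x -> u1 x = 0.
Proof.
  intros Hx Hm Hx0. destruct (Rtotal_order (u1 x) 0) as [Hl|[He|Hg]]; auto; exfalso.
  - destruct (dlim_neg_right u x (u1 x) (Hd1 x Hx0) Hl) as [d [Hd H]].
    set (h := Rmin d (x - a) / 2).
    assert (Rmin d (x - a) <= d) by apply Rmin_l. assert (Rmin d (x - a) <= x - a) by apply Rmin_r.
    assert (0 < Rmin d (x - a)) by (apply Rmin_pos; lra).
    destruct (H h ltac:(unfold h; lra)) as [_ A]. assert (B := Hm (x - h) ltac:(unfold h; lra)). lra.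
  - destruct (dlim_pos_right u x (u1 x) (Hd1 x Hx0) Hg) as [d [Hd H]].
    set (h := Rmin d (b - x) / 2).
    assert (Rmin d (b - x) <= d) by apply Rmin_l. assert (Rmin d (b - x) <= b - x) by apply Rmin_r.
    assert (0 < Rmin d (b - x)) by (apply Rmin_pos; lra).
    destruct (H h ltac:(unfold h; lra)) as [A _]. assert (B := Hm (x + h) ltac:(unfold h; lra)). lra.
Qed.

Lemma crit_min x a b : a < x < b -> (forall c, a <= c <= b -> u x <= u c) -> 0 < x -> u1 x = 0.
Proof.
  intros Hx Hm Hx0. destruct (Rtotal_order (u1 x) 0) as [Hl|[He|Hg]]; auto; exfalso.
  - destruct (dlim_neg_right u x (u1 x) (Hd1 x Hx0) Hl) as [d [Hd H]].
    set (h := Rmin d (b - x) / 2).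
    assert (Rmin d (b - x) <= d) by apply Rmin_l. assert (Rmin d (b - x) <= b - x) by apply Rmin_r.
    assert (0 < Rmin d (b - x)) by (apply Rmin_pos; lra).
    destruct (H h ltac:(unfold h; lra)) as [A _]. assert (B := Hm (x + h) ltac:(unfold h; lra)). lra.
  - destruct (dlim_pos_right u x (u1 x) (Hd1 x Hx0) Hg) as [d [Hd H]].
    set (h := Rmin d (x - a) / 2).
    assert (Rmin d (x - a) <= d) by apply Rmin_l. assert (Rmin d (x - a) <= x - a) by apply Rmin_r.
    assert (0 < Rmin d (x - a)) by (apply Rmin_pos; lra).
    destruct (H h ltac:(unfold h; lra)) as [_ A]. assert (B := Hm (x - h) ltac:(unfold h; lra)). lra.
Qed.

Lemma right_incr x : 0 < x -> u1 x = 0 -> 0 < u2 x ->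
  exists d, 0 < d /\ forall h, 0 < h < d -> u x < u (x + h).
Proof.
  intros Hx H1 H2. destruct (dlim_pos_right u1 x (u2 x) (Hd2 x Hx) H2) as [d [Hd H]].
  exists d. split; auto. intros h Hh. apply (mono_lt u u1); [lra| |].
  - intros c Hc. apply Hd1. lra.
  - intros c Hc. destruct (H (c - x) ltac:(lra)) as [A _]. replace (x + (c - x)) with c in A by ring. lra.
Qed.

Lemma right_decr x : 0 < x -> u1 x = 0 -> u2 x < 0 ->
  exists d, 0 < d /\ forall h, 0 < h < d -> u (x + h) < u x.
Proof.
  intros Hx H1 H2. destruct (dlim_neg_right u1 x (u2 x) (Hd2 x Hx) H2) as [d [Hd H]].
  exists d. split; auto. intros h Hh. apply (mono_gt u u1); [lra| |].
  - intros c Hc. apply Hd1. lra.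
  - intros c Hc. destruct (H (c - x) ltac:(lra)) as [A _]. replace (x + (c - x)) with c in A by ring. lra.
Qed.

Section Beta.
Variable beta : R.
Hypothesis Hb0 : 0 < beta.
Hypothesis Hright : forall t, beta < t -> fq t < 0.
Hypothesis Hleft : forall t, 0 < t -> 0 <= Fq t -> fq t <= 0 -> beta <= t.

Lemma u_le_beta r : 0 <= r -> u r <= beta.
Proof.
  intros Hr. apply Rnot_lt_le. intros Hlt.
  destruct (Hinf beta Hb0) as [M0 HM0].
  set (R0 := Rmax M0 r + 1).
  assert (HR1 : M0 < R0) by (unfold R0; assert (HX := Rmax_l M0 r); lra).
  assert (HR2 : r < R0) by (unfold R0; assert (HX := Rmax_r M0 r); lra).
  assert (HuR : u R0 < beta).
  { assert (A := HM0 R0 HR1). apply Rabs_def2 in A. lra. }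
  destruct (max_on R0 ltac:(lra)) as [Mx [HMx HM]].
  assert (HuM : beta < u Mx) by (assert (A := HM r ltac:(lra)); lra).
  destruct (Rle_lt_or_eq_dec Mx R0 (proj2 HMx)) as [HMR|HMR]; [|subst; lra].
  destruct (Rle_lt_or_eq_dec 0 Mx (proj1 HMx)) as [HM0'|HM0'].
  - assert (Hc : u1 Mx = 0) by (apply (crit_max Mx 0 R0); auto; lra).
    assert (Hu2 : 0 < u2 Mx).
    { rewrite ode2 by lra. rewrite Hc. assert (A := Hright (u Mx) HuM). lra. }
    destruct (right_incr Mx HM0' Hc Hu2) as [d [Hd H]].
    set (h := Rmin d (R0 - Mx) / 2).
    assert (Rmin d (R0 - Mx) <= d) by apply Rmin_l. assert (Rmin d (R0 - Mx) <= R0 - Mx) by apply Rmin_r.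
    assert (0 < Rmin d (R0 - Mx)) by (apply Rmin_pos; lra).
    assert (A := H h ltac:(unfold h; lra)). assert (B := HM (Mx + h) ltac:(unfold h; lra)). lra.
  - subst Mx.
    assert (Hf : fq (u 0) < 0) by (apply Hright; auto).
    destruct (sign_near0_neg Hf) as [d [Hd H]].
    set (h := Rmin d R0 / 2).
    assert (Rmin d R0 <= d) by apply Rmin_l. assert (Rmin d R0 <= R0) by apply Rmin_r.
    assert (0 < Rmin d R0) by (apply Rmin_pos; lra).
    assert (A := incr_from0 d h H ltac:(unfold h; lra)).
    assert (B := HM h ltac:(unfold h; lra)). lra.
Qed.

Lemma u1_nonpos r0 : 0 < r0 -> u1 r0 <= 0.
Proof.
  intros Hr0. apply Rnot_lt_le. intros Hlt.
  destruct (dlim_pos_right u r0 (u1 r0) (Hd1 r0 Hr0) Hlt) as [d [Hd Hloc]].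
  set (h := Rmin d r0 / 2).
  assert (Rmin d r0 <= d) by apply Rmin_l. assert (Rmin d r0 <= r0) by apply Rmin_r.
  assert (0 < Rmin d r0) by (apply Rmin_pos; lra).
  assert (Hh : 0 < h < d) by (unfold h; lra).
  assert (Hh2 : h < r0) by (unfold h; lra).
  destruct (Hloc h Hh) as [_ Hd0].
  destruct (min_on r0 ltac:(lra)) as [mx [Hmx Hm]].
  assert (Hbm : beta <= u mx).
  { destruct (Rle_lt_or_eq_dec mx r0 (proj2 Hmx)) as [Hmr|Hmr].
    2:{ subst mx. assert (A := Hm (r0 - h) ltac:(lra)). lra. }
    destruct (Rle_lt_or_eq_dec 0 mx (proj1 Hmx)) as [Hm0|Hm0].
    - assert (Hc : u1 mx = 0) by (apply (crit_min mx 0 r0); auto; lra).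
      assert (HE := E_nonneg mx Hm0). unfold Ee in HE. rewrite Hc in HE.
      apply Hleft; [apply Hpos; lra|lra|].
      apply Rnot_lt_le. intros Hf.
      assert (Hu2 : u2 mx < 0) by (rewrite ode2 by lra; rewrite Hc; lra).
      destruct (right_decr mx Hm0 Hc Hu2) as [d2 [Hd2' HH2]].
      set (h2 := Rmin d2 (r0 - mx) / 2).
      assert (Rmin d2 (r0 - mx) <= d2) by apply Rmin_l. assert (Rmin d2 (r0 - mx) <= r0 - mx) by apply Rmin_r.
      assert (0 < Rmin d2 (r0 - mx)) by (apply Rmin_pos; lra).
      assert (A := HH2 h2 ltac:(unfold h2; lra)). assert (B := Hm (mx + h2) ltac:(unfold h2; lra)). lra.
    - subst mx. apply Hleft; [apply u0pos|apply F0_nonneg|].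
      apply Rnot_lt_le. intros Hf.
      destruct (sign_near0_pos Hf) as [d2 [Hd2' HH2]].
      set (h2 := Rmin d2 r0 / 2).
      assert (Rmin d2 r0 <= d2) by apply Rmin_l. assert (Rmin d2 r0 <= r0) by apply Rmin_r.
      assert (0 < Rmin d2 r0) by (apply Rmin_pos; lra).
      assert (A := decr_from0 d2 h2 HH2 ltac:(unfold h2; lra)).
      assert (B := Hm h2 ltac:(unfold h2; lra)). lra. }
  assert (A := Hm (r0 - h) ltac:(lra)).
  assert (B := u_le_beta r0 ltac:(lra)). lra.
Qed.

End Beta.

Lemma global_props : exists beta, 0 < beta /\ (forall r, 0 <= r -> u r <= beta) /\
  (forall r, 0 < r -> u1 r <= 0) /\
  (forall t t', 0 < t -> t <= t' -> t' <= beta -> 0 < Gq t -> 0 < Gq t').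
Proof.
  destruct (beta_exists n p q om ltac:(unfold n; lia) Hp Hpq Hom0 Hom)
    as [beta [Hb0 [_ [_ [_ [Hright [Hleft Halg]]]]]]].
  exists beta. split; auto. split; [|split].
  - intros r Hr. apply (u_le_beta beta Hb0 Hright r Hr).
  - intros r Hr. apply (u1_nonpos beta Hb0 Hright Hleft r Hr).
  - exact Halg.
Qed.

Lemma u_nonincr a b : 0 <= a <= b -> (forall r, 0 < r -> u1 r <= 0) -> u b <= u a.
Proof.
  intros Hab Hneg. destruct (Rle_lt_or_eq_dec 0 a (proj1 Hab)) as [Ha| <-].
  - apply (mono_ge u u1); [lra| |].
    + intros c Hc. apply Hd1. lra.
    + intros c Hc. apply Hneg. lra.
  - destruct (Rle_lt_or_eq_dec 0 b (proj2 Hab)) as [Hb| <-]; [|lra].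
    assert (A := mvt0_upper 0 b Hb ltac:(intros x Hx; apply Hneg; lra)). lra.
Qed.

Section Decay.
Hypothesis Hneg : forall r, 0 < r -> u1 r <= 0.
Variable beta : R.
Hypothesis Hbeta : forall r, 0 <= r -> u r <= beta.
Hypothesis Hb0 : 0 < beta.

Lemma tail : exists R1, 0 <= R1 /\ forall r, R1 < r ->
  om / 2 * u r <= u2 r /\ Gq (u r) < 0 /\ u r <= 1.
Proof.
  destruct (small_facts n p q om Hp Hpq Hom0) as [tau [Htau Hsm]].
  destruct (Hinf tau ltac:(lra)) as [R1 HR1].
  exists (Rmax R1 0). split; [apply Rmax_r|]. intros r Hr.
  assert (Hr1 : R1 < r) by (assert (HX := Rmax_l R1 0); lra).
  assert (Hr0 : 0 < r) by (assert (HX := Rmax_r R1 0); lra).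
  assert (Hu : 0 < u r) by (apply Hpos; lra).
  assert (A := HR1 r Hr1). rewrite Rabs_right in A by lra.
  destruct (Hsm (u r) ltac:(lra)) as [Hk [Hh _]].
  split; [|split; [|lra]].
  - rewrite ode2 by lra. unfold fq. rewrite fp_kap by auto.
    assert (0 <= INR m / r) by (unfold Rdiv; apply Rmult_le_pos; [apply pos_INR|apply Rlt_le, Rinv_0_lt_compat; lra]).
    assert (H1 := Hneg r Hr0). nra.
  - unfold Gq. rewrite Gp_hh by auto. assert (0 < u r ^ 2) by (apply pow_lt; lra). nra.
Qed.

Lemma PP_far delta A : 0 < delta -> exists R, A < R /\ - delta < PP R.
Proof.
  intros Hdel.
  destruct tail as [R1 [HR1 Ht]].
  set (c := Rmin 1 (om / 2)).
  assert (Hc : 0 < c) by (apply Rmin_pos; lra).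
  assert (Hc1 : c <= 1) by apply Rmin_l. assert (Hc2 : c <= om / 2) by apply Rmin_r.
  assert (Hcc : c * c <= om / 2) by nra.
  set (Q := fun x => u1 x * u1 x - c * c * (u x * u x)).
  set (Q' := fun x => (u2 x * u1 x + u1 x * u2 x) - c * c * (u1 x * u x + u x * u1 x)).
  assert (HdQ : forall x, 0 < x -> derivable_pt_lim Q x (Q' x)).
  { intros x Hx. unfold Q, Q'. apply dl_minus; [apply dl_mult; apply Hd2; auto|].
    apply dl_scal. apply dl_mult; apply Hd1; auto. }
  assert (HQd : forall a b, R1 < a -> a <= b -> Q b <= Q a).
  { intros a b Ha Hab. apply (mono_ge Q Q'); auto.
    - intros x Hx. apply HdQ. lra.
    - intros x Hx. unfold Q'. destruct (Ht x ltac:(lra)) as [H1 _].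
      assert (Hu := Hpos x ltac:(lra)). assert (Hn := Hneg x ltac:(lra)).
      assert (0 <= u2 x - c * c * u x) by nra. nra. }
  assert (HQ : forall r, R1 < r -> 0 <= Q r).
  { intros r Hr. apply Rnot_lt_le. intros Hlt. set (eta := - Q r).
    destruct (Hinf (Rmin 1 eta) ltac:(apply Rmin_pos; unfold eta; lra)) as [M HM].
    set (s := Rmax M r + 1).
    assert (Hs1 : M < s) by (unfold s; assert (HX := Rmax_l M r); lra).
    assert (Hs2 : r < s) by (unfold s; assert (HX := Rmax_r M r); lra).
    assert (B := HM s Hs1). assert (Hus : 0 < u s) by (apply Hpos; lra).
    rewrite Rabs_right in B by lra.
    assert (u s < 1) by (assert (Rmin 1 eta <= 1) by apply Rmin_l; lra).
    assert (u s < eta) by (assert (Rmin 1 eta <= eta) by apply Rmin_r; lra).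
    assert (C := HQd r s Hr ltac:(lra)). unfold Q in C. unfold eta, Q in *.
    assert (0 <= u1 s * u1 s) by nra.
    assert (c * c * (u s * u s) <= u s) by (assert (c * c <= 1) by nra; nra).
    lra. }
  assert (Hcu : forall r, R1 < r -> c * u r <= - u1 r).
  { intros r Hr. assert (A1 := HQ r Hr). unfold Q in A1.
    assert (Hu := Hpos r ltac:(lra)). assert (Hn := Hneg r ltac:(lra)).
    apply Rnot_lt_le. intros Hlt. assert (0 <= - u1 r) by lra.
    assert ((- u1 r) * (- u1 r) < (c * u r) * (c * u r)) by (apply Rmult_le_0_lt_compat; lra) || nra.
    nra. }
  set (R2 := Rmax R1 (INR n / c) + 1).
  assert (HR2a : R1 < R2) by (unfold R2; assert (HX := Rmax_l R1 (INR n / c)); lra).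
  assert (HR2b : INR n / c < R2) by (unfold R2; assert (HX := Rmax_r R1 (INR n / c)); lra).
  set (Z := fun x => u x * x ^ n).
  assert (HZ : forall r, R2 <= r -> Z r <= Z R2).
  { intros r Hr. apply (mono_ge Z (fun x => u1 x * x ^ n + u x * (INR n * x ^ Nat.pred n))); auto.
    - intros x Hx. unfold Z. apply dl_mult; [apply Hd1; lra|apply dl_pow].
    - intros x Hx. assert (Hx1 : R1 < x) by lra.
      assert (A1 := Hcu x Hx1). assert (Hu := Hpos x ltac:(lra)).
      assert (Hxm : 0 < x ^ m) by (apply pow_lt; lra).
      assert (E : x ^ n = x * x ^ m) by reflexivity.
      replace (Nat.pred n) with m by reflexivity. rewrite E.
      assert (Hxc : INR n <= c * x).
      { assert (INR n / c * c <= x * c) by (apply Rmult_le_compat_r; lra).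
        replace (INR n / c * c) with (INR n) in H by (field; lra). lra. }
      assert (u1 x * x <= - c * u x * x) by nra.
      assert (u1 x * (x * x ^ m) <= - c * u x * x * x ^ m) by nra.
      assert (u x * (INR n * x ^ m) <= u x * (c * x) * x ^ m).
      { assert (0 <= u x * x ^ m) by nra. nra. }
      nra. }
  assert (HZ0 : 0 < Z R2) by (unfold Z; apply Rmult_lt_0_compat; [apply Hpos; lra|apply pow_lt; lra]).
  assert (HN := Rabs_pos (N - 2)).
  set (Cst := Rabs (N - 2) * beta * Z R2).
  assert (HCst : 0 <= Cst) by (unfold Cst; apply Rmult_le_pos; [apply Rmult_le_pos|]; lra).
  set (R := Rmax (Rmax A (R2 + 1)) (Cst / delta) + 1).
  assert (HRa : A < R) by (unfold R; assert (HX := Rmax_l (Rmax A (R2 + 1)) (Cst / delta)); assert (HY := Rmax_l A (R2 + 1)); lra).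
  assert (HRb : R2 + 1 < R) by (unfold R; assert (HX := Rmax_l (Rmax A (R2 + 1)) (Cst / delta)); assert (HY := Rmax_r A (R2 + 1)); lra).
  assert (HRc : Cst / delta < R) by (unfold R; assert (HX := Rmax_r (Rmax A (R2 + 1)) (Cst / delta)); lra).
  exists R. split; auto.
  assert (HR0 : 0 < R) by lra.
  assert (Hu1R : - u1 R <= beta).
  { destruct (MVT_cor2 u u1 (R - 1) R ltac:(lra)) as [cc [Ecc Hcc2]].
    { intros x Hx. apply Hd1. lra. }
    assert (u1 cc <= u1 R).
    { apply (mono_le u1 u2); [lra| |].
      - intros x Hx. apply Hd2. lra.
      - intros x Hx. destruct (Ht x ltac:(lra)) as [H1 _]. assert (Hu := Hpos x ltac:(lra)). nra. }
    assert (Hb := Hbeta (R - 1) ltac:(lra)). assert (Hu := Hpos R ltac:(lra)).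
    lra. }
  assert (HuR : u R * R ^ n <= Z R2) by (apply HZ; lra).
  assert (HE := E_nonneg R HR0). unfold Ee in HE.
  assert (Hnn : 0 <= - u1 R) by (assert (H1 := Hneg R HR0); lra).
  assert (HuRpos : 0 < u R) by (apply Hpos; lra).
  assert (Hm0 : 0 < R ^ m) by (apply pow_lt; lra).
  assert (En : R ^ n = R * R ^ m) by reflexivity.
  assert (HRm : R ^ m * u R * R <= Z R2) by (rewrite En in HuR; nra).
  assert (Hterm : Rabs ((N - 2) * (R ^ m * (u R * u1 R))) * R <= Cst).
  { rewrite !Rabs_mult. rewrite (Rabs_right (R ^ m)) by lra. rewrite (Rabs_right (u R)) by lra.
    rewrite (Rabs_left1 (u1 R)) by (assert (H1 := Hneg R HR0); lra).
    unfold Cst.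
    assert (R ^ m * (u R * - u1 R) * R <= Z R2 * beta).
    { replace (R ^ m * (u R * - u1 R) * R) with ((R ^ m * u R * R) * (- u1 R)) by ring.
      apply Rmult_le_compat; try lra. assert (0 <= R ^ m * u R * R) by (repeat apply Rmult_le_pos; lra). lra. }
    assert (0 <= R ^ m * (u R * - u1 R)) by (apply Rmult_le_pos; [lra|apply Rmult_le_pos; lra]).
    nra. }
  assert (Hfirst : 0 <= R ^ n * (u1 R * u1 R + 2 * Fq (u R))).
  { apply Rmult_le_pos; [apply pow_le; lra|]. lra. }
  assert (HA := Rle_abs (- ((N - 2) * (R ^ m * (u R * u1 R))))). rewrite Rabs_Ropp in HA.
  assert (Hsmall : Cst < delta * R).
  { apply Rmult_lt_reg_r with (/ delta); [apply Rinv_0_lt_compat; lra|].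
    replace (delta * R * / delta) with R by (field; lra). exact HRc. }
  unfold PP.
  assert (Rabs ((N - 2) * (R ^ m * (u R * u1 R))) < delta).
  { apply Rmult_lt_reg_r with R; [lra|]. lra. }
  lra.
Qed.

End Decay.

Lemma main_pos r : 0 < r -> Pfun n om p q u u1 r > 0.
Proof.
  intros Hr. rewrite PP_eq by auto.
  destruct global_props as [beta [Hb0 [Hbeta [Hneg Halg]]]].
  destruct (tail Hneg) as [R1 [HR1 Ht]].
  assert (HdP : forall x, 0 < x -> derivable_pt_lim PP x (x ^ m * Gq (u x))) by (intros; apply dPP; auto).
  destruct (Rlt_or_le 0 (Gq (u r))) as [HG|HG].
  - assert (Hall : forall s, 0 < s <= r -> 0 < Gq (u s)).
    { intros s Hs. apply (Halg (u r) (u s)); auto.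
      + apply Hpos; lra.
      + apply u_nonincr; auto; lra.
      + apply Hbeta; lra. }
    assert (A : PP (r / 2) < PP r).
    { apply (mono_lt PP (fun x => x ^ m * Gq (u x))); [lra| |].
      - intros x Hx. apply HdP. lra.
      - intros x Hx. apply Rmult_lt_0_compat; [apply pow_lt; lra|apply Hall; lra]. }
    assert (B : 0 <= PP (r / 2)).
    { apply Rnot_lt_le. intros Hlt.
      destruct (PP_near0 (- PP (r / 2)) ltac:(lra)) as [e0 [He0 Hn0]].
      set (e := Rmin e0 (r / 2) / 2).
      assert (Rmin e0 (r / 2) <= e0) by apply Rmin_l. assert (Rmin e0 (r / 2) <= r / 2) by apply Rmin_r.
      assert (0 < Rmin e0 (r / 2)) by (apply Rmin_pos; lra).
      assert (C := Hn0 e ltac:(unfold e; lra)).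
      assert (D : PP e <= PP (r / 2)).
      { apply (mono_le PP (fun x => x ^ m * Gq (u x))); [unfold e; lra| |].
        - intros x Hx. apply HdP. unfold e in Hx. lra.
        - intros x Hx. apply Rlt_le, Rmult_lt_0_compat; [apply pow_lt; unfold e in Hx; lra|apply Hall; unfold e in Hx; lra]. }
      lra. }
    lra.
  - assert (Hall : forall s, r <= s -> Gq (u s) <= 0).
    { intros s Hs. apply Rnot_lt_le. intros Hlt.
      assert (Gq (u r) > 0); [|lra].
      apply (Halg (u s) (u r)); auto.
      + apply Hpos; lra.
      + apply u_nonincr; auto; lra.
      + apply Hbeta; lra. }
    set (R3 := Rmax r R1 + 1).
    assert (HR3a : r < R3) by (unfold R3; assert (HX := Rmax_l r R1); lra).
    assert (HR3b : R1 < R3) by (unfold R3; assert (HX := Rmax_r r R1); lra).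
    assert (A : PP R3 <= PP r).
    { apply (mono_ge PP (fun x => x ^ m * Gq (u x))); [lra| |].
      - intros x Hx. apply HdP. lra.
      - intros x Hx. assert (0 < x ^ m) by (apply pow_lt; lra). assert (Gq (u x) <= 0) by (apply Hall; lra). nra. }
    assert (B : PP (R3 + 1) < PP R3).
    { apply (mono_gt PP (fun x => x ^ m * Gq (u x))); [lra| |].
      - intros x Hx. apply HdP. lra.
      - intros x Hx. assert (0 < x ^ m) by (apply pow_lt; lra).
        destruct (Ht x ltac:(lra)) as [_ [HGx _]]. nra. }
    assert (C : 0 <= PP (R3 + 1)).
    { apply Rnot_lt_le. intros Hlt.
      destruct (PP_far Hneg beta Hbeta Hb0 (- PP (R3 + 1)) (R3 + 1) ltac:(lra)) as [R [HR HPR]].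
      assert (PP R <= PP (R3 + 1)).
      { apply (mono_ge PP (fun x => x ^ m * Gq (u x))); [lra| |].
        - intros x Hx. apply HdP. lra.
        - intros x Hx. assert (0 < x ^ m) by (apply pow_lt; lra). assert (Gq (u x) <= 0) by (apply Hall; lra). nra. }
      lra. }
    lra.
Qed.

End ODE.

Theorem corollary3p2 (n : nat) (p q omega : R) (u u1 u2 : R -> R)
  (Hn : (1 <= n)%nat) (Hp : 1 < p) (Hpq : p < q)
  (Hom0 : 0 < omega) (Hom : omega < omega_pq p q)
  (* u is a positive function on [0, oo) *)
  (Hpos : forall r, 0 <= r -> 0 < u r)
  (* u is twice differentiable on (0, oo) with u' = u1, u'' = u2 *)
  (Hd1 : forall r, 0 < r -> derivable_pt_lim u r (u1 r))
  (Hd2 : forall r, 0 < r -> derivable_pt_lim u1 r (u2 r))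
  (* the ODE *)
  (Hode : forall r, 0 < r ->
     u2 r + (INR n - 1) / r * u1 r + fnl omega p q (u r) = 0)
  (* u'(0) = 0 (right derivative at 0) *)
  (H0 : forall eps, 0 < eps -> exists delta, 0 < delta /\
     forall h, 0 < h < delta -> Rabs ((u h - u 0) / h) < eps)
  (* u(r) -> 0 as r -> oo *)
  (Hinf : forall eps, 0 < eps -> exists M, forall r, M < r -> Rabs (u r) < eps) :
  forall r, 0 < r -> Pfun n omega p q u u1 r > 0.
Proof.
  destruct n as [|m]; [lia|].
  intros r Hr.
  exact (main_pos m p q omega u u1 u2 Hp Hpq Hom0 Hom Hpos Hd1 Hd2 Hode H0 Hinf r Hr).
Qed.
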